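(* Let $\lambda>0$, $p\in\mathbb{N}$, and let $\omega=\left[0,\frac{1}{2\sqrt\lambda}\right]\times\left[-\frac{1}{4\sqrt\lambda},\frac{1}{4\sqrt\lambda}\right]$ with coordinates $(x_1,x_2)$. Let $f\in C^{p+1}(\omega)$ be complex-valued with $f(0,x_2)=0$ for each $x_2$, and suppose that for some $\beta_p,\beta_{p+1}>0$, $$\left\|\frac{\partial^{p+1}f}{\partial x_1^{p+1}}\right\|_{L^2(\omega)}\le\beta_{p+1}\lambda^{1+\frac p2},\qquad \left\|\frac{\partial^{p}f}{\partial x_1^{p}}\right\|_{L^2(\omega)}\le\beta_{p}\lambda^{\frac12+\frac p2}.$$ Then for all $\xi_1,\xi_2,\varphi\in\mathbb{R}$, $$\left\|f-e^{i(\xi_1x_1+\xi_2x_2+\varphi)}\right\|_{L^2(\omega)}^2\ \ge\ \frac1{36}\min\left\{4^{-p-\frac52}\lambda^{-1},\ 4^{-\frac p2-\frac32}\,6^{\frac1{2p}}\,(\beta_{p+1}^2+\beta_p^2)^{-\frac1{2p}}\,\lambda^{-1-\frac1p}\right\}.$$ *)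

(* Defs.v *)
From Stdlib Require Import Reals List.
From Coquelicot Require Import Coquelicot.
Open Scope R_scope.

Definition expi (theta : R) : C := (cos theta, sin theta).

(* Iterated partial derivatives of a real function of two variables:
   [true] = d/dx1, [false] = d/dx2; the head of the list is applied last. *)
Fixpoint pderiv (ds : list bool) (g : R -> R -> R) : R -> R -> R :=
  match ds with
  | nil => g
  | b :: ds' =>
      let h := pderiv ds' g in
      if b then (fun x1 x2 => Derive (fun t => h t x2) x1)
      else (fun x1 x2 => Derive (fun t => h x1 t) x2)
  end.

Definition Ck_R2 (k : nat) (g : R -> R -> R) : Prop :=
  (forall ds, (length ds < k)%nat -> forall x1 x2,
      ex_derive (fun t => pderiv ds g t x2) x1 /\
      ex_derive (fun t => pderiv ds g x1 t) x2) /\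
  (forall ds, (length ds <= k)%nat -> forall z : R * R,
      continuous (fun w : R * R => pderiv ds g (fst w) (snd w)) z).

Definition Ck_R2_C (k : nat) (F : R -> R -> C) : Prop :=
  Ck_R2 k (fun x1 x2 => Re (F x1 x2)) /\ Ck_R2 k (fun x1 x2 => Im (F x1 x2)).

Definition dx1_n (k : nat) (F : R -> R -> C) : R -> R -> C :=
  fun x1 x2 => (Derive_n (fun t => Re (F t x2)) k x1,
                Derive_n (fun t => Im (F t x2)) k x1).

Definition in_rect (a b c d x1 x2 : R) : Prop := a <= x1 <= b /\ c <= x2 <= d.

Definition L2sq_rect (a b c d : R) (F : R -> R -> C) : R :=
  RInt (fun x1 => RInt (fun x2 => (Cmod (F x1 x2))^2) c d) a b.

Definition L2_rect (a b c d : R) (F : R -> R -> C) : R :=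
  sqrt (L2sq_rect a b c d F).

(* Main.v *)
Require Import Defs.
From Stdlib Require Import Reals Lra Lia Psatz List.
From Coquelicot Require Import Coquelicot.
Open Scope R_scope.

Definition JC (g : R -> R -> R) : Prop :=
  forall z : R * R, continuous (fun w : R * R => g (fst w) (snd w)) z.

Lemma JC_2d g : JC g -> forall x y, continuity_2d_pt g x y.
Proof. intros H x y. apply continuity_2d_pt_filterlim. apply (H (x,y)). Qed.

Lemma JC_slice1 g : JC g -> forall y x, continuous (fun x => g x y) x.
Proof.
  intros H y x.
  apply (continuous_comp_2 (fun x => x) (fun _ => y) g).
  - apply continuous_id.
  - apply continuous_const.
  - apply (H (x,y)).
Qed.

Lemma JC_slice2 g : JC g -> forall x y, continuous (fun y => g x y) y.
Proof.
  intros H x y.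
  apply (continuous_comp_2 (fun _ => x) (fun y => y) g).
  - apply continuous_const.
  - apply continuous_id.
  - apply (H (x,y)).
Qed.

Lemma JC_swap g : JC g -> JC (fun y x => g x y).
Proof.
  intros H [y x]. simpl.
  apply (continuous_comp_2 (fun w : R*R => snd w) (fun w : R*R => fst w) g).
  - apply continuous_snd.
  - apply continuous_fst.
  - apply (H (x,y)).
Qed.

Lemma ex_RInt_cont (f : R -> R) a b : (forall x, continuous f x) -> ex_RInt f a b.
Proof. intros H. apply (ex_RInt_continuous (V := R_CompleteNormedModule)). intros; apply H. Qed.

Lemma RInt_point_R (f : R -> R) a : RInt f a a = 0.
Proof. apply (RInt_point (V := R_CompleteNormedModule)). Qed.
Lemma RInt_const_R a b c : RInt (fun _ => c) a b = (b - a) * c.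
Proof. rewrite (RInt_const (V := R_CompleteNormedModule)). reflexivity. Qed.
Lemma RInt_plus_R (f g : R -> R) a b : ex_RInt f a b -> ex_RInt g a b ->
  RInt (fun x => f x + g x) a b = RInt f a b + RInt g a b.
Proof. intros; apply (RInt_plus (V := R_CompleteNormedModule)); auto. Qed.
Lemma RInt_minus_R (f g : R -> R) a b : ex_RInt f a b -> ex_RInt g a b ->
  RInt (fun x => f x - g x) a b = RInt f a b - RInt g a b.
Proof. intros; apply (RInt_minus (V := R_CompleteNormedModule)); auto. Qed.
Lemma RInt_scal_R (f : R -> R) a b l : ex_RInt f a b ->
  RInt (fun x => l * f x) a b = l * RInt f a b.
Proof. intros; apply (RInt_scal (V := R_CompleteNormedModule)); auto. Qed.
Lemma RInt_Chasles_R (f : R -> R) a b c : ex_RInt f a b -> ex_RInt f b c ->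
  RInt f a b + RInt f b c = RInt f a c.
Proof. intros; apply (RInt_Chasles (V := R_CompleteNormedModule)); auto. Qed.
Lemma RInt_swap_R (f : R -> R) a b : ex_RInt f a b -> RInt f b a = - RInt f a b.
Proof. intros H. rewrite <- (opp_RInt_swap (V := R_CompleteNormedModule)); auto. Qed.
Lemma RInt_comp_lin_R (f : R -> R) u v a b : ex_RInt f (u * a + v) (u * b + v) ->
  RInt (fun y => u * f (u * y + v)) a b = RInt f (u * a + v) (u * b + v).
Proof. intros; apply (RInt_comp_lin (V := R_CompleteNormedModule)); auto. Qed.

Lemma RInt_diff_bound (f1 f2 : R -> R) c d e :
  (forall x, continuous f1 x) -> (forall x, continuous f2 x) ->
  (forall t, Rmin c d <= t <= Rmax c d -> Rabs (f1 t - f2 t) <= e) ->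
  Rabs (RInt f1 c d - RInt f2 c d) <= (Rmax c d - Rmin c d) * e.
Proof.
  intros H1 H2 Hb.
  assert (Hm : RInt f1 c d - RInt f2 c d = RInt (fun y => f1 y - f2 y) c d).
  { symmetry. apply (RInt_minus (V := R_CompleteNormedModule)); apply ex_RInt_cont; auto. }
  rewrite Hm.
  assert (Hc : forall x, continuous (fun y => f1 y - f2 y) x).
  { intros x. apply (continuous_minus f1 f2); auto. }
  destruct (Rle_dec c d) as [Hcd|Hcd].
  - rewrite Rmin_left, Rmax_right in * by lra.
    apply abs_RInt_le_const; auto. apply ex_RInt_cont; auto.
  - rewrite Rmin_right, Rmax_left in * by lra.
    rewrite <- (opp_RInt_swap _ d c) by (apply ex_RInt_cont; auto).
    change (Rabs (- RInt (fun y => f1 y - f2 y) d c) <= (c - d) * e).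
    rewrite Rabs_Ropp. apply abs_RInt_le_const; [lra| |auto]. apply ex_RInt_cont; auto.
Qed.

Lemma param_cont g c d : JC g -> forall x0, continuous (fun x => RInt (fun y => g x y) c d) x0.
Proof.
  intros H x0.
  apply continuity_pt_filterlim.
  intros eps Heps.
  assert (Hcd : Rmin c d <= Rmax c d) by (apply Rle_trans with c; [apply Rmin_l|apply Rmax_l]).
  set (e := eps / (Rmax c d - Rmin c d + 1)).
  assert (He : 0 < e) by (unfold e; apply Rdiv_lt_0_compat; lra).
  assert (Hee : e * (Rmax c d - Rmin c d + 1) = eps) by (unfold e; field; lra).
  clearbody e.
  destruct (uniform_continuity_2d g (x0 - 1) (x0 + 1) (Rmin c d) (Rmax c d)) with (eps := mkposreal e He)
    as [del Hdel].
  { intros; apply JC_2d; auto. }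
  exists (Rmin del 1). split.
  { apply Rmin_glb_lt; [apply cond_pos|lra]. }
  intros x [_ Hx]. change (Rabs (x - x0) < Rmin del 1) in Hx.
  assert (Hx1 : Rabs (x - x0) < del) by (apply Rlt_le_trans with (1 := Hx); apply Rmin_l).
  assert (Hx2 : Rabs (x - x0) < 1) by (apply Rlt_le_trans with (1 := Hx); apply Rmin_r).
  change (Rabs (RInt (fun y => g x y) c d - RInt (fun y => g x0 y) c d) < eps).
  eapply Rle_lt_trans.
  { apply RInt_diff_bound with (e := e).
    - apply JC_slice2; auto.
    - apply JC_slice2; auto.
    - intros t Ht. left. apply (Hdel x0 t x t); try lra.
      + apply Rabs_lt_between in Hx2. split; lra.
      + rewrite Rminus_diag, Rabs_R0. apply cond_pos. }
  nra.
Qed.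

Lemma Fubini g a b c d : JC g ->
  RInt (fun x => RInt (fun y => g x y) c d) a b =
  RInt (fun y => RInt (fun x => g x y) a b) c d.
Proof.
  intros H.
  set (G := fun x => RInt (fun y => g x y) c d).
  set (Phi := fun T => RInt (fun y => RInt (fun x => g x y) a T) c d).
  assert (HG : forall x, continuous G x) by (intros; apply param_cont; auto).
  assert (Hd : forall T, is_derive Phi T (G T)).
  { intros T. unfold Phi, G.
    set (f := fun T y => RInt (fun x => g x y) a T).
    assert (Hfd : forall T y, is_derive (fun u => f u y) T (g T y)).
    { intros T0 y. unfold f. apply (is_derive_RInt (fun x => g x y) _ a).
      - apply filter_forall. intros b0. apply (RInt_correct (V := R_CompleteNormedModule)).
        apply ex_RInt_cont. intros; apply JC_slice1; auto.
      - apply JC_slice1; auto. }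
    assert (HD : forall T y, Derive (fun u => f u y) T = g T y).
    { intros; apply is_derive_unique; auto. }
    assert (Hpar : is_derive (fun x0 => RInt (fun t => f x0 t) c d) T
             (RInt (fun t => Derive (fun u => f u t) T) c d)).
    { apply is_derive_RInt_param.
      - apply filter_forall. intros x1 t _. eexists; apply Hfd.
      - intros t _. intros eps.
        destruct (JC_2d g H T t eps) as [del Hdel].
        exists del. intros u v Hu Hv. rewrite !HD. apply Hdel; auto.
      - apply filter_forall. intros y. apply ex_RInt_cont. intros z.
        unfold f. apply (param_cont (fun y x => g x y)). apply JC_swap; auto. }
    replace (RInt (fun y => g T y) c d) with (RInt (fun t => Derive (fun u => f u t) T) c d).
    + exact Hpar.
    + apply RInt_ext. intros; apply HD. }
  assert (Hi := is_RInt_derive Phi G a b (fun x _ => Hd x) (fun x _ => HG x)).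
  apply is_RInt_unique in Hi. rewrite Hi.
  unfold Phi, minus, plus, opp; simpl.
  replace (RInt (fun y => RInt (fun x => g x y) a a) c d) with 0.
  - ring.
  - rewrite (RInt_ext _ (fun _ => 0)).
    + rewrite RInt_const_R. ring.
    + intros. apply RInt_point_R.
Qed.

Fixpoint sumj (f : nat -> R) (n : nat) : R :=
  match n with O => 0 | S n' => sumj f n' + f n end.

Lemma sumj_ext f g n : (forall j, (1 <= j <= n)%nat -> f j = g j) -> sumj f n = sumj g n.
Proof.
  induction n; simpl; intros H; auto.
  rewrite IHn by (intros; apply H; lia). rewrite H by lia. reflexivity.
Qed.
Lemma sumj_plus f g n : sumj (fun j => f j + g j) n = sumj f n + sumj g n.
Proof. induction n; simpl; [ring|rewrite IHn; ring]. Qed.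
Lemma sumj_scal c f n : sumj (fun j => c * f j) n = c * sumj f n.
Proof. induction n; simpl; [ring|rewrite IHn; ring]. Qed.
Lemma sumj_le f g n : (forall j, (1 <= j <= n)%nat -> f j <= g j) -> sumj f n <= sumj g n.
Proof.
  induction n; simpl; intros H; [lra|].
  apply Rplus_le_compat; [apply IHn; intros; apply H; lia| apply H; lia].
Qed.
Lemma sumj_nonneg f n : (forall j, (1 <= j <= n)%nat -> 0 <= f j) -> 0 <= sumj f n.
Proof.
  intros H. replace 0 with (sumj (fun _ => 0) n). apply sumj_le; auto.
  induction n; simpl; auto. rewrite IHn; [ring|intros; apply H; lia].
Qed.
Lemma sumj_abs f n : Rabs (sumj f n) <= sumj (fun j => Rabs (f j)) n.
Proof.
  induction n; simpl. rewrite Rabs_R0; lra.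
  eapply Rle_trans; [apply Rabs_triang|]. lra.
Qed.

Lemma sumj_CS w x n : (forall j, (1 <= j <= n)%nat -> 0 <= w j) ->
  (sumj (fun j => w j * x j) n)^2 <= sumj w n * sumj (fun j => w j * (x j)^2) n.
Proof.
  induction n; cbn [sumj]; intros H. simpl; lra.
  assert (IH := IHn (fun j Hj => H j ltac:(lia))).
  assert (Hw : 0 <= w (S n)) by (apply H; lia).
  assert (HW : 0 <= sumj w n) by (apply sumj_nonneg; intros; apply H; lia).
  set (A := sumj (fun j => w j * x j) n) in *.
  set (W := sumj w n) in *.
  set (S2 := sumj (fun j => w j * x j ^ 2) n) in *.
  assert (HS : 0 <= S2) by (apply sumj_nonneg; intros j Hj; apply Rmult_le_pos; [apply H; lia| apply pow2_ge_0]).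
  assert (Hk : 2 * A * x (S n) <= W * x (S n)^2 + S2).
  { destruct (Req_dec W 0) as [HW0|HW0].
    - rewrite HW0 in IH. assert (HA : A = 0).
      { apply Rsqr_0_uniq. unfold Rsqr. assert (Hsq := pow2_ge_0 A). simpl in *. lra. }
      rewrite HA, HW0. assert (Hsq := pow2_ge_0 (x (S n))). lra.
    - assert (HWp : 0 < W) by lra.
      assert (Hq : 0 <= W * (W * x (S n)^2 + S2 - 2 * A * x (S n))).
      { replace (W * (W * x (S n)^2 + S2 - 2 * A * x (S n))) with
          ((W * x (S n) - A)^2 + (W * S2 - A^2)) by ring.
        assert (Hsq := pow2_ge_0 (W * x (S n) - A)). lra. }
      apply Rmult_le_reg_l with W; [exact HWp|]. lra. }
  assert (Hk2 : w (S n) * (2 * A * x (S n)) <= w (S n) * (W * x (S n)^2 + S2))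
    by (apply Rmult_le_compat_l; auto).
  lra.
Qed.

Fixpoint bin (n k : nat) : R :=
  match n, k with
  | _, O => 1
  | O, S _ => 0
  | S n', S k' => bin n' k' + bin n' (S k')
  end.

Lemma bin_nonneg n k : 0 <= bin n k.
Proof. revert k; induction n; intros [|k]; simpl; try lra. generalize (IHn k) (IHn (S k)); lra. Qed.

Lemma bin_big n k : (n < k)%nat -> bin n k = 0.
Proof.
  revert k; induction n; intros [|k] H; simpl; try lia; auto.
  rewrite !IHn; try lia. ring.
Qed.

Lemma bin_1 n : bin n 1 = INR n.
Proof. induction n; simpl; auto. rewrite IHn. destruct n; simpl; ring. Qed.

Lemma bin_absorb n j : INR (S j) * bin (S n) (S j) = INR (S n) * bin n j.
Proof.
  revert j; induction n; intros j.
  - destruct j; simpl; ring.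
  - destruct j as [|k].
    + change (bin (S (S n)) 1) with (bin (S n) 0 + bin (S n) 1).
      rewrite bin_1. change (bin (S n) 0) with 1. rewrite !S_INR. simpl. ring.
    + change (bin (S (S n)) (S (S k))) with (bin (S n) (S k) + bin (S n) (S (S k))).
      change (bin (S n) (S k)) with (bin n k + bin n (S k)) at 2.
      rewrite Rmult_plus_distr_l.
      rewrite (IHn (S k)).
      assert (H2 : INR (S (S k)) * bin (S n) (S k) = bin (S n) (S k) + INR (S k) * bin (S n) (S k))
        by (rewrite (S_INR (S k)); ring).
      rewrite H2, (IHn k).
      change (bin (S n) (S k)) with (bin n k + bin n (S k)).
      rewrite !S_INR. ring.
Qed.

Definition sum0 (f : nat -> R) (n : nat) : R := f O + sumj f n.

Lemma sum0_S f n : sum0 f (S n) = sum0 f n + f (S n).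
Proof. unfold sum0; simpl; ring. Qed.

Lemma bin_0 n : bin n 0 = 1.
Proof. destruct n; reflexivity. Qed.
Lemma bin_SS n k : bin (S n) (S k) = bin n k + bin n (S k).
Proof. reflexivity. Qed.
Lemma bin_nn n : bin n n = 1.
Proof. induction n; simpl; auto. rewrite IHn, bin_big by lia. ring. Qed.

Lemma bin_sum n : sum0 (bin n) n = 2 ^ n.
Proof.
  induction n.
  - unfold sum0; simpl; ring.
  - assert (H : forall m, (m <= n)%nat ->
      sum0 (bin (S n)) m = sum0 (bin n) m + sum0 (bin n) m - bin n m).
    { induction m; intros Hm.
      - unfold sum0; simpl sumj. rewrite !bin_0. ring.
      - rewrite !sum0_S, IHm by lia. rewrite bin_SS. ring. }
    rewrite sum0_S, H by lia. rewrite IHn, bin_SS, bin_nn, (bin_big n (S n)) by lia.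
    simpl. ring.
Qed.

Lemma sum0_ext f g n : (forall j, (j <= n)%nat -> f j = g j) -> sum0 f n = sum0 g n.
Proof.
  intros H. unfold sum0. rewrite H by lia. f_equal. apply sumj_ext. intros; apply H; lia.
Qed.
Lemma sum0_le f g n : (forall j, (j <= n)%nat -> f j <= g j) -> sum0 f n <= sum0 g n.
Proof.
  intros H. unfold sum0. apply Rplus_le_compat; [apply H; lia|]. apply sumj_le. intros; apply H; lia.
Qed.
Lemma sum0_nonneg f n : (forall j, (j <= n)%nat -> 0 <= f j) -> 0 <= sum0 f n.
Proof.
  intros H. unfold sum0. apply Rplus_le_le_0_compat; [apply H; lia|]. apply sumj_nonneg. intros; apply H; lia.
Qed.
Lemma sum0_mono f m n : (forall j, 0 <= f j) -> (m <= n)%nat -> sum0 f m <= sum0 f n.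
Proof.
  intros H Hmn. induction Hmn; [lra|]. rewrite sum0_S. generalize (H (S m0)); lra.
Qed.
Lemma sumj_shift_le f n k : (forall j, 0 <= f j) ->
  sumj (fun j => f (j + k)%nat) n <= sum0 f (n + k).
Proof.
  intros H. induction n.
  - simpl. apply sum0_nonneg. intros; apply H.
  - cbn [sumj]. replace (S n + k)%nat with (S (n + k)) by lia.
    rewrite sum0_S. replace (S n + k)%nat with (S (n + k)) by lia. lra.
Qed.

Lemma bin_sum_le n : sumj (bin n) n <= 2 ^ n.
Proof. rewrite <- bin_sum. unfold sum0. rewrite bin_0. lra. Qed.

Lemma bin_absorb3 n j : bin n j / (INR (S j) * INR (S (S j)) * INR (S (S (S j)))) =
  bin (S (S (S n))) (S (S (S j))) / (INR (S n) * INR (S (S n)) * INR (S (S (S n)))).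
Proof.
  assert (H1 := bin_absorb n j).
  assert (H2 := bin_absorb (S n) (S j)).
  assert (H3 := bin_absorb (S (S n)) (S (S j))).
  assert (P1 : 0 < INR (S j)) by (apply lt_0_INR; lia).
  assert (P2 : 0 < INR (S (S j))) by (apply lt_0_INR; lia).
  assert (P3 : 0 < INR (S (S (S j)))) by (apply lt_0_INR; lia).
  assert (Q1 : 0 < INR (S n)) by (apply lt_0_INR; lia).
  assert (Q2 : 0 < INR (S (S n))) by (apply lt_0_INR; lia).
  assert (Q3 : 0 < INR (S (S (S n)))) by (apply lt_0_INR; lia).
  set (X := INR (S j) * INR (S (S j)) * INR (S (S (S j)))).
  set (Y := INR (S n) * INR (S (S n)) * INR (S (S (S n)))).
  assert (E : bin n j * Y = bin (S (S (S n))) (S (S (S j))) * X).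
  { unfold X, Y.
    replace (bin (S (S (S n))) (S (S (S j))) * (INR (S j) * INR (S (S j)) * INR (S (S (S j)))))
      with ((INR (S (S (S j))) * bin (S (S (S n))) (S (S (S j)))) * INR (S (S j)) * INR (S j)) by ring.
    rewrite H3.
    replace (INR (S (S (S n))) * bin (S (S n)) (S (S j)) * INR (S (S j)) * INR (S j))
      with ((INR (S (S j)) * bin (S (S n)) (S (S j))) * INR (S (S (S n))) * INR (S j)) by ring.
    rewrite H2.
    replace (INR (S (S n)) * bin (S n) (S j) * INR (S (S (S n))) * INR (S j))
      with ((INR (S j) * bin (S n) (S j)) * INR (S (S n)) * INR (S (S (S n)))) by ring.
    rewrite H1. ring. }
  assert (HX : X <> 0) by (unfold X; apply Rgt_not_eq; repeat apply Rmult_lt_0_compat; auto).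
  assert (HY : Y <> 0) by (unfold Y; apply Rgt_not_eq; repeat apply Rmult_lt_0_compat; auto).
  replace (bin n j / X) with (bin n j * Y / (X * Y)) by (field; auto).
  rewrite E. field; auto.
Qed.

Lemma inv_cube_le j : (1 <= j)%nat ->
  / INR j ^ 3 <= 24 / (INR (S j) * INR (S (S j)) * INR (S (S (S j)))).
Proof.
  intros Hj. rewrite !S_INR.
  assert (H1 : 1 <= INR j) by (apply (le_INR 1); auto).
  set (x := INR j) in *.
  assert (Hp : 0 < x ^ 3) by (apply pow_lt; lra).
  assert (Hq : 0 < (x + 1) * (x + 1 + 1) * (x + 1 + 1 + 1)) by (repeat apply Rmult_lt_0_compat; lra).
  apply Rle_trans with (24 / (24 * x ^ 3)).
  - right. field. lra.
  - unfold Rdiv. apply Rmult_le_compat_l; [lra|]. apply Rinv_le_contravar; [auto|].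
    simpl. nra.
Qed.

Lemma bin_cube_sum N :
  sumj (fun j => bin N j / INR j ^ 3) N <=
  192 * 2 ^ N / (INR (S N) * INR (S (S N)) * INR (S (S (S N)))).
Proof.
  set (Y := INR (S N) * INR (S (S N)) * INR (S (S (S N)))).
  assert (HY : 0 < Y) by (unfold Y; repeat apply Rmult_lt_0_compat; apply lt_0_INR; lia).
  apply Rle_trans with (sumj (fun j => 24 / Y * bin (N + 3) (j + 3)) N).
  - apply sumj_le. intros j Hj.
    replace (bin N j / INR j ^ 3) with (bin N j * / INR j ^ 3) by reflexivity.
    apply Rle_trans with (bin N j * (24 / (INR (S j) * INR (S (S j)) * INR (S (S (S j)))))).
    + apply Rmult_le_compat_l; [apply bin_nonneg|]. apply inv_cube_le; lia.
    + right. replace (bin N j * (24 / (INR (S j) * INR (S (S j)) * INR (S (S (S j))))))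
        with (24 * (bin N j / (INR (S j) * INR (S (S j)) * INR (S (S (S j)))))) by (unfold Rdiv; ring).
      rewrite bin_absorb3. fold Y. replace (N + 3)%nat with (S (S (S N))) by lia.
      replace (j + 3)%nat with (S (S (S j))) by lia. unfold Rdiv. ring.
  - rewrite sumj_scal.
    apply Rle_trans with (24 / Y * sum0 (bin (N + 3)) (N + 3)).
    + apply Rmult_le_compat_l. unfold Rdiv; apply Rmult_le_pos; [lra|left; apply Rinv_0_lt_compat; auto].
      apply (sumj_shift_le (bin (N + 3)) N 3). intros; apply bin_nonneg.
    + rewrite bin_sum. rewrite pow_add. right. simpl. field. lra.
Qed.

(* alternating binomial sums and discrete polynomials *)
Fixpoint altE (N : nat) (h : nat -> R) : R :=
  match N with O => h O | S N' => altE N' h - altE N' (fun j => h (S j)) end.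

Lemma altE_ext N h1 h2 : (forall j, h1 j = h2 j) -> altE N h1 = altE N h2.
Proof.
  revert h1 h2; induction N; intros h1 h2 H; simpl; auto.
  rewrite (IHN h1 h2), (IHN (fun j => h1 (S j)) (fun j => h2 (S j))); auto.
Qed.
Lemma altE_minus N h1 h2 : altE N (fun j => h1 j - h2 j) = altE N h1 - altE N h2.
Proof.
  revert h1 h2; induction N; intros h1 h2; simpl; auto.
  rewrite IHN, (IHN (fun j => h1 (S j)) (fun j => h2 (S j))). ring.
Qed.

Fixpoint Pol (n : nat) (h : nat -> R) : Prop :=
  match n with O => forall j, h j = h O | S n' => Pol n' (fun j => h (S j) - h j) end.

Lemma Pol_ext n h1 h2 : (forall j, h1 j = h2 j) -> Pol n h1 -> Pol n h2.
Proof.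
  revert h1 h2; induction n; intros h1 h2 H; simpl.
  - intros P j. rewrite <- !H. auto.
  - apply IHn. intros; rewrite !H; auto.
Qed.
Lemma Pol_plus n h1 h2 : Pol n h1 -> Pol n h2 -> Pol n (fun j => h1 j + h2 j).
Proof.
  revert h1 h2; induction n; intros h1 h2; simpl.
  - intros P1 P2 j. rewrite P1, P2. auto.
  - intros P1 P2. eapply Pol_ext; [|apply (IHn _ _ P1 P2)]. intros; simpl; ring.
Qed.
Lemma Pol_scal n c h : Pol n h -> Pol n (fun j => c * h j).
Proof.
  revert h; induction n; intros h; simpl.
  - intros P j. rewrite P. auto.
  - intros P. eapply Pol_ext; [|apply (IHn _ P)]. intros; simpl; ring.
Qed.
Lemma Pol_zero n : Pol n (fun _ => 0).
Proof.
  induction n; simpl; auto. eapply Pol_ext; [|apply IHn]. intros; simpl; ring.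
Qed.
Lemma Pol_mono n h : Pol n h -> Pol (S n) h.
Proof.
  revert h; induction n; intros h; simpl.
  - intros P j. rewrite (P (S j)), (P j), (P 1%nat). reflexivity.
  - intros P. exact (IHn _ P).
Qed.
Lemma Pol_shift n h : Pol n h -> Pol n (fun j => h (S j)).
Proof.
  revert h; induction n; intros h; simpl.
  - intros P j. rewrite (P (S j)), (P 1%nat). reflexivity.
  - intros P. exact (IHn _ P).
Qed.
Lemma Pol_mulx a t n h : Pol n h -> Pol (S n) (fun j => (a + INR j * t) * h j).
Proof.
  revert h; induction n; intros h P.
  - change (forall j, (a + INR (S j) * t) * h (S j) - (a + INR j * t) * h j =
      (a + INR 1 * t) * h 1%nat - (a + INR 0 * t) * h 0%nat).
    intros j. rewrite (P (S j)), (P j), (P 1%nat), S_INR. simpl. ring.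
  - change (Pol (S n) (fun j => (a + INR (S j) * t) * h (S j) - (a + INR j * t) * h j)).
    apply Pol_ext with (fun j => (a + INR j * t) * (h (S j) - h j) + t * h (S j)).
    { intros j. rewrite S_INR. ring. }
    apply Pol_plus.
    + apply IHn. exact P.
    + apply Pol_scal. apply Pol_shift. exact P.
Qed.
Lemma Pol_pow a t k : Pol k (fun j => (a + INR j * t) ^ k).
Proof.
  induction k.
  - simpl. auto.
  - apply Pol_ext with (fun j => (a + INR j * t) * (a + INR j * t) ^ k).
    { intros; simpl; ring. }
    apply Pol_mulx. exact IHk.
Qed.
Lemma Pol_le n m h : (n <= m)%nat -> Pol n h -> Pol m h.
Proof. intros H; induction H; auto. intros P; apply Pol_mono; auto. Qed.

Lemma Pol_kill n h : Pol n h -> altE (S n) h = 0.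
Proof.
  revert h; induction n; intros h P.
  - simpl. simpl in P. rewrite (P 1%nat). ring.
  - change (altE (S n) h - altE (S n) (fun j => h (S j)) = 0).
    assert (E : altE (S n) (fun j => h (S j) - h j) = altE (S n) (fun j => h (S j)) - altE (S n) h)
      by apply altE_minus.
    rewrite (IHn _ P) in E. lra.
Qed.

Lemma altE_explicit N h : altE N h = sum0 (fun j => (-1) ^ j * bin N j * h j) N.
Proof.
  revert h; induction N; intros h.
  - unfold sum0; simpl. ring.
  - change (altE N h - altE N (fun j => h (S j)) = sum0 (fun j => (-1) ^ j * bin (S N) j * h j) (S N)).
    rewrite !IHN.
    assert (G : forall m, (m <= N)%nat ->
      sum0 (fun j => (-1) ^ j * bin (S N) j * h j) (S m) =
      sum0 (fun j => (-1) ^ j * bin N j * h j) (S m)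
      - sum0 (fun j => (-1) ^ j * bin N j * h (S j)) m).
    { induction m; intros Hm.
      - unfold sum0; simpl. rewrite !bin_0. ring.
      - rewrite sum0_S, IHm by lia. rewrite !sum0_S. rewrite (bin_SS N (S m)). simpl pow. ring. }
    rewrite G by lia. rewrite sum0_S. rewrite (bin_big N (S N)) by lia. ring.
Qed.

Definition polyQ (c : nat -> R) (N : nat) (y : R) : R := sumj (fun m => c m * y ^ (m - 1)) N.

Lemma Pol_polyQ c N n a t : (N <= S n)%nat ->
  Pol n (fun j => polyQ c N (a + INR j * t)).
Proof.
  unfold polyQ. induction N; intros HN.
  - simpl. apply Pol_zero.
  - change (Pol n (fun j => sumj (fun m => c m * (a + INR j * t) ^ (m - 1)) N +
                            c (S N) * (a + INR j * t) ^ (S N - 1))).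
    apply Pol_plus. apply IHN; lia.
    apply Pol_scal. apply Pol_le with (S N - 1)%nat; [lia|]. apply Pol_pow.
Qed.

Lemma Qdiff c N a t :
  polyQ c N a = - sumj (fun j => (-1) ^ j * bin N j * polyQ c N (a + INR j * t)) N.
Proof.
  destruct N as [|n].
  - unfold polyQ; simpl. ring.
  - assert (H := Pol_kill n _ (Pol_polyQ c (S n) n a t ltac:(lia))).
    rewrite altE_explicit in H. unfold sum0 in H. simpl INR in H.
    replace (a + 0 * t) with a in H by ring. simpl pow in H. rewrite bin_0 in H. lra.
Qed.

Definition CR (f : R -> R) : Prop := forall x, continuous f x.

Lemma CR_plus f g : CR f -> CR g -> CR (fun x => f x + g x).
Proof. intros H1 H2 x. apply (continuous_plus f g); auto. Qed.
Lemma CR_minus f g : CR f -> CR g -> CR (fun x => f x - g x).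
Proof. intros H1 H2 x. apply (continuous_minus f g); auto. Qed.
Lemma CR_mult f g : CR f -> CR g -> CR (fun x => f x * g x).
Proof. intros H1 H2 x. apply (continuous_mult f g); auto. Qed.
Lemma CR_const c : CR (fun _ => c).
Proof. intros x. apply continuous_const. Qed.
Lemma CR_id : CR (fun x => x).
Proof. intros x. apply continuous_id. Qed.
Lemma CR_ext f g : (forall x, f x = g x) -> CR f -> CR g.
Proof. intros H Hf x. apply (continuous_ext f); auto. Qed.
Lemma CR_pow f n : CR f -> CR (fun x => f x ^ n).
Proof.
  intros Hf. induction n.
  - apply CR_ext with (fun _ => 1); [intros; simpl; ring|apply CR_const].
  - apply CR_ext with (fun x => f x * f x ^ n); [intros; simpl; ring|]. apply CR_mult; auto.
Qed.
Lemma CR_scal c f : CR f -> CR (fun x => c * f x).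
Proof. intros; apply CR_mult; auto; apply CR_const. Qed.
Lemma CR_comp f g : CR f -> CR g -> CR (fun x => g (f x)).
Proof. intros H1 H2 x. apply (continuous_comp f g); auto. Qed.
Lemma CR_lin f u v : CR f -> CR (fun y => f (u * y + v)).
Proof.
  intros H. apply (CR_comp (fun y => u * y + v) f); auto.
  apply CR_plus; [apply CR_scal, CR_id|apply CR_const].
Qed.
Lemma CR_sumj (F : nat -> R -> R) N : (forall j, CR (F j)) -> CR (fun x => sumj (fun j => F j x) N).
Proof.
  intros H. induction N; simpl.
  - apply CR_const.
  - apply CR_plus; auto.
Qed.

Lemma RInt_ext_R (f g : R -> R) a b : (forall x, f x = g x) -> RInt f a b = RInt g a b.
Proof. intros H. apply (RInt_ext (V := R_CompleteNormedModule)). intros; apply H. Qed.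

Lemma exR f a b : CR f -> ex_RInt f a b.
Proof. intros; apply ex_RInt_cont; auto. Qed.

Lemma RInt_le_c f g a b : a <= b -> CR f -> CR g ->
  (forall x, a <= x <= b -> f x <= g x) -> RInt f a b <= RInt g a b.
Proof. intros. apply RInt_le; auto; try apply exR; auto. intros; apply H2; lra. Qed.

Lemma RInt_nonneg_c f a b : a <= b -> CR f -> (forall x, a <= x <= b -> 0 <= f x) -> 0 <= RInt f a b.
Proof.
  intros. rewrite <- (Rmult_0_r (b - a)). rewrite <- RInt_const_R.
  apply RInt_le_c; auto. apply CR_const.
Qed.

Lemma RInt_sub f a b c d : CR f -> (forall x, a <= x <= b -> 0 <= f x) ->
  a <= c -> c <= d -> d <= b -> RInt f c d <= RInt f a b.
Proof.
  intros Hf Hp H1 H2 H3.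
  rewrite <- (RInt_Chasles_R f a c b) by (apply exR; auto).
  rewrite <- (RInt_Chasles_R f c d b) by (apply exR; auto).
  assert (0 <= RInt f a c) by (apply RInt_nonneg_c; auto; intros; apply Hp; lra).
  assert (0 <= RInt f d b) by (apply RInt_nonneg_c; auto; intros; apply Hp; lra).
  lra.
Qed.

Lemma RInt_sumj (F : nat -> R -> R) N a b : (forall j, CR (F j)) ->
  RInt (fun x => sumj (fun j => F j x) N) a b = sumj (fun j => RInt (F j) a b) N.
Proof.
  intros H. induction N; simpl.
  - rewrite RInt_const_R. ring.
  - rewrite RInt_plus_R; try apply exR; auto. rewrite IHN; auto.
    apply CR_sumj; auto.
Qed.

Lemma RInt_CS h a b : a <= b -> CR h ->
  (RInt h a b) ^ 2 <= (b - a) * RInt (fun x => h x ^ 2) a b.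
Proof.
  intros Hab Hh.
  destruct (Req_dec a b) as [E|E].
  - subst. rewrite !RInt_point_R. simpl; lra.
  - set (m := RInt h a b / (b - a)).
    assert (H0 : 0 <= RInt (fun x => (h x - m) ^ 2) a b).
    { apply RInt_nonneg_c; auto. apply CR_pow, CR_minus; auto; apply CR_const.
      intros; apply pow2_ge_0. }
    assert (Hexp : RInt (fun x => (h x - m) ^ 2) a b =
       RInt (fun x => h x ^ 2) a b - 2 * m * RInt h a b + m ^ 2 * (b - a)).
    { rewrite (RInt_ext_R _ (fun x => (h x ^ 2 + (-2 * m) * h x) + m ^ 2)) by (intros; ring).
      rewrite RInt_plus_R; try apply exR.
      rewrite RInt_plus_R; try apply exR. rewrite RInt_scal_R by (apply exR; auto).
      rewrite RInt_const_R. match goal with |- ?A = ?B => change (@eq R A B) end. ring.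
      all: try apply CR_pow; auto; try apply CR_scal; auto; try apply CR_const.
      apply CR_plus; [apply CR_pow; auto|apply CR_scal; auto]. }
    rewrite Hexp in H0. unfold m in H0.
    assert (Hb : 0 < b - a) by lra.
    assert (E2 : forall I J : R, J - 2 * (I / (b - a)) * I + (I / (b - a)) ^ 2 * (b - a) = J - I^2 / (b - a))
      by (intros; field; lra).
    rewrite E2 in H0.
    assert (E3 : forall I J : R, 0 <= J - I ^ 2 / (b - a) -> I ^ 2 <= (b - a) * J).
    { intros I J HH. apply Rmult_le_reg_r with (/ (b - a)). apply Rinv_0_lt_compat; lra.
      replace ((b - a) * J * / (b - a)) with J by (field; lra).
      unfold Rdiv in HH. lra. }
    apply E3. exact H0.
Qed.

Lemma RInt_sq d : RInt (fun x => x ^ 2) 0 d = d ^ 3 / 3.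
Proof.
  assert (H := is_RInt_derive (fun x => x ^ 3 / 3) (fun x => x ^ 2) 0 d).
  apply is_RInt_unique in H. rewrite H. unfold minus, plus, opp; simpl. field.
  - intros x _. auto_derive; auto. field.
  - intros x _. apply (CR_pow (fun x => x) 2 CR_id x).
Qed.

Lemma sq_seg g L y t : CR g -> 0 <= y <= L -> 0 <= t <= L ->
  (RInt g t y) ^ 2 <= L * RInt (fun x => g x ^ 2) 0 L.
Proof.
  intros Hg Hy Ht.
  assert (Hg2 : CR (fun x => g x ^ 2)) by (apply CR_pow; auto).
  assert (Hnn : forall x, 0 <= g x ^ 2) by (intros; apply pow2_ge_0).
  destruct (Rle_dec t y).
  - apply Rle_trans with ((y - t) * RInt (fun x => g x ^ 2) t y).
    + apply RInt_CS; auto.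
    + apply Rmult_le_compat; try lra. apply RInt_nonneg_c; auto; lra.
      apply RInt_sub; auto; lra.
  - rewrite RInt_swap_R by (apply exR; auto).
    replace ((- RInt g y t) ^ 2) with ((RInt g y t) ^ 2) by ring.
    apply Rle_trans with ((t - y) * RInt (fun x => g x ^ 2) y t).
    + apply RInt_CS; auto; lra.
    + apply Rmult_le_compat; try lra. apply RInt_nonneg_c; auto; lra.
      apply RInt_sub; auto; lra.
Qed.

Lemma sobolev (w g : R -> R) L : 0 < L -> CR w -> CR g -> (forall x, is_derive w x (g x)) ->
  forall y, 0 <= y <= L ->
  w y ^ 2 <= 2 / L * RInt (fun x => w x ^ 2) 0 L + 2 * L * RInt (fun x => g x ^ 2) 0 L.
Proof.
  intros HL Hw Hg Hd y Hy.
  set (G := RInt (fun x => g x ^ 2) 0 L).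
  assert (Hpt : forall t, 0 <= t <= L -> w y ^ 2 <= 2 * w t ^ 2 + 2 * L * G).
  { intros t Ht.
    assert (E : w y - w t = RInt g t y).
    { symmetry. apply is_RInt_unique.
      apply (is_RInt_derive w g t y); intros; auto. }
    assert (Hs := sq_seg g L y t Hg Hy Ht). fold G in Hs.
    rewrite <- E in Hs.
    replace (w y) with (w t + (w y - w t)) by ring.
    assert (Hq := pow2_ge_0 (w t - (w y - w t))).
    assert (forall u v : R, (u + v)^2 <= 2 * u^2 + 2 * v^2).
    { intros u v. assert (Hq2 := pow2_ge_0 (u - v)). nra. }
    eapply Rle_trans; [apply H|]. lra. }
  assert (Hint : RInt (fun _ => w y ^ 2) 0 L <= RInt (fun t => 2 * w t ^ 2 + 2 * L * G) 0 L).
  { apply RInt_le_c; try lra. apply CR_const.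
    apply CR_plus; [apply CR_scal, CR_pow; auto|apply CR_const].
    auto. }
  rewrite RInt_const_R in Hint.
  rewrite RInt_plus_R in Hint by (apply exR; try apply CR_const; apply CR_scal, CR_pow; auto).
  rewrite RInt_scal_R in Hint by (apply exR; apply CR_pow; auto).
  rewrite RInt_const_R in Hint.
  assert (E4 : forall A B C : R, (L - 0) * A <= 2 * B + (L - 0) * (2 * L * C) ->
     A <= 2 / L * B + 2 * L * C).
  { intros A B C HH. apply Rmult_le_reg_l with L; auto.
    replace (L * (2 / L * B + 2 * L * C)) with (2 * B + L * (2 * L * C)) by (field; lra). lra. }
  apply E4. exact Hint.
Qed.

Lemma taylor_sum (u : R -> R) N y :
  sum_f_R0 (fun m => (y - 0) ^ m / INR (Factorial.fact m) * Derive_n u m 0) N =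
  u 0 + y * polyQ (fun m => Derive_n u m 0 / INR (Factorial.fact m)) N y.
Proof.
  induction N.
  - unfold polyQ; simpl. field.
  - change (sum_f_R0 (fun m => (y - 0) ^ m / INR (Factorial.fact m) * Derive_n u m 0) N +
            (y - 0) ^ S N / INR (Factorial.fact (S N)) * Derive_n u (S N) 0 =
            u 0 + y * (polyQ (fun m => Derive_n u m 0 / INR (Factorial.fact m)) N y +
               Derive_n u (S N) 0 / INR (Factorial.fact (S N)) * y ^ (S N - 1))).
    rewrite IHN. replace (S N - 1)%nat with N by lia.
    assert (0 < INR (Factorial.fact (S N))) by (apply lt_0_INR, Factorial.lt_O_fact).
    rewrite <- tech_pow_Rmult. replace (y - 0) with y by ring. field. lra.
Qed.

Lemma taylor_bound (u : R -> R) N L V :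
  (forall k x, (k <= S N)%nat -> ex_derive_n u k x) ->
  u 0 = 0 -> 0 <= V ->
  (forall y, 0 <= y <= L -> Derive_n u (S N) y ^ 2 <= V) ->
  forall y, 0 <= y <= L ->
  Rabs (u y - y * polyQ (fun m => Derive_n u m 0 / INR (Factorial.fact m)) N y) <=
  y ^ S N / INR (Factorial.fact (S N)) * sqrt V.
Proof.
  intros Hd H0 HV HB y Hy.
  assert (Hf : 0 < INR (Factorial.fact (S N))) by (apply lt_0_INR, Factorial.lt_O_fact).
  destruct (Req_dec y 0) as [E|E].
  - subst. rewrite H0. rewrite Rmult_0_l, Rminus_0_r, Rabs_R0.
    apply Rmult_le_pos; [|apply sqrt_pos]. unfold Rdiv. apply Rmult_le_pos.
    simpl; lra. left; apply Rinv_0_lt_compat; auto.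
  - destruct (Taylor_Lagrange u N 0 y) as [z [Hz Heq]]; [lra| |].
    { intros; apply Hd; auto. }
    rewrite taylor_sum, H0 in Heq.
    rewrite Heq. replace (y - 0) with y by ring.
    match goal with |- Rabs ?A <= _ => replace A with (y ^ S N / INR (Factorial.fact (S N)) * Derive_n u (S N) z) by ring end.
    rewrite Rabs_mult. apply Rmult_le_compat; try apply Rabs_pos.
    + rewrite Rabs_right. lra. unfold Rdiv. apply Rle_ge, Rmult_le_pos.
      apply pow_le; lra. left; apply Rinv_0_lt_compat; auto.
    + rewrite <- sqrt_pow2 with (Rabs (Derive_n u (S N) z)) by apply Rabs_pos.
      apply sqrt_le_1_alt. rewrite <- Rsqr_pow2, <- Rsqr_abs, Rsqr_pow2. apply HB; lra.
Qed.

Lemma pow_le_mono x y n : 0 <= x -> x <= y -> x ^ n <= y ^ n.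
Proof. intros; apply pow_incr; lra. Qed.

Lemma pointwise (u Q : R -> R) N L K r a t t0 :
  0 <= K -> 0 < t0 -> t0 <= t -> 0 <= a -> a + INR N * t <= r -> r <= L ->
  (forall y, 0 <= y <= L -> Rabs (u y - y * Q y) <= y ^ S N * K) ->
  Q a = - sumj (fun j => (-1) ^ j * bin N j * Q (a + INR j * t)) N ->
  u a ^ 2 <= 2 * a ^ 2 * 2 ^ N / t0 ^ 2 *
               sumj (fun j => bin N j * u (a + INR j * t) ^ 2 / INR j ^ 2) N
             + 2 * a ^ 2 * 4 ^ S N * r ^ (2 * N) * K ^ 2.
Proof.
  intros HK Ht0 Ht Ha Har HrL HT HQ.
  assert (Hr : a <= r).
  { assert (0 <= INR N * t) by (apply Rmult_le_pos; [apply pos_INR|lra]). lra. }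
  set (X := sumj (fun j => bin N j * (Rabs (u (a + INR j * t)) / (INR j * t0))) N).
  assert (HQj : forall j, (1 <= j <= N)%nat ->
     Rabs (Q (a + INR j * t)) <= Rabs (u (a + INR j * t)) / (INR j * t0) + r ^ N * K).
  { intros j Hj.
    set (y := a + INR j * t).
    assert (Hj1 : 1 <= INR j) by (apply (le_INR 1); lia).
    assert (HjN : INR j <= INR N) by (apply le_INR; lia).
    assert (Hyl : INR j * t0 <= y).
    { unfold y. assert (INR j * t0 <= INR j * t) by (apply Rmult_le_compat_l; lra). lra. }
    assert (Hjt0 : 0 < INR j * t0) by (apply Rmult_lt_0_compat; lra).
    assert (Hyr : y <= r).
    { unfold y. assert (INR j * t <= INR N * t) by (apply Rmult_le_compat_r; lra). lra. }
    assert (Hy0 : 0 < y) by lra.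
    assert (HTy := HT y ltac:(lra)).
    assert (EQ : Q y = (u y - (u y - y * Q y)) / y) by (field; lra).
    rewrite EQ. unfold Rdiv. rewrite Rabs_mult, Rabs_Rinv by lra. rewrite (Rabs_right y) by lra.
    apply Rle_trans with ((Rabs (u y) + y ^ S N * K) * / y).
    { apply Rmult_le_compat_r. left; apply Rinv_0_lt_compat; lra.
      eapply Rle_trans; [apply Rabs_triang|]. rewrite Rabs_Ropp. lra. }
    rewrite Rmult_plus_distr_r.
    apply Rplus_le_compat.
    - apply Rmult_le_compat_l; [apply Rabs_pos|]. apply Rinv_le_contravar; lra.
    - replace (y ^ S N * K * / y) with (y ^ N * K) by (simpl; field; lra).
      apply Rmult_le_compat_r; auto. apply pow_le_mono; lra. }
  assert (HQa : Rabs (Q a) <= X + 2 ^ N * (r ^ N * K)).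
  { rewrite HQ, Rabs_Ropp. eapply Rle_trans; [apply sumj_abs|].
    apply Rle_trans with (sumj (fun j => bin N j * (Rabs (u (a + INR j * t)) / (INR j * t0)) +
                                        bin N j * (r ^ N * K)) N).
    - apply sumj_le. intros j Hj. rewrite !Rabs_mult.
      rewrite pow_1_abs, Rmult_1_l, (Rabs_right (bin N j)) by (apply Rle_ge, bin_nonneg).
      rewrite <- Rmult_plus_distr_l. apply Rmult_le_compat_l; [apply bin_nonneg|]. apply HQj; auto.
    - rewrite sumj_plus. apply Rplus_le_compat; [unfold X; right; reflexivity|].
      rewrite (sumj_ext _ (fun j => (r ^ N * K) * bin N j)) by (intros; ring).
      rewrite sumj_scal. rewrite Rmult_comm. apply Rmult_le_compat_r.
      apply Rmult_le_pos; auto. apply pow_le; lra. apply bin_sum_le. }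
  assert (HX0 : 0 <= X).
  { apply sumj_nonneg. intros j Hj. apply Rmult_le_pos; [apply bin_nonneg|].
    unfold Rdiv; apply Rmult_le_pos; [apply Rabs_pos|].
    assert (1 <= INR j) by (apply (le_INR 1); lia).
    left; apply Rinv_0_lt_compat, Rmult_lt_0_compat; lra. }
  assert (Hua : Rabs (u a) <= a * X + a * ((2 ^ N + 1) * r ^ N * K)).
  { assert (HTa := HT a ltac:(lra)).
    replace (u a) with ((u a - a * Q a) + a * Q a) by ring.
    eapply Rle_trans; [apply Rabs_triang|].
    rewrite Rabs_mult, (Rabs_right a) by lra.
    assert (Ha1 : a ^ S N * K <= a * (r ^ N * K)).
    { simpl. rewrite <- Rmult_assoc. apply Rmult_le_compat_r; auto.
      apply Rmult_le_compat_l; auto. apply pow_le_mono; lra. }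
    assert (Ha2 : a * Rabs (Q a) <= a * (X + 2 ^ N * (r ^ N * K))) by (apply Rmult_le_compat_l; auto).
    nra. }
  assert (Hsq : u a ^ 2 <= 2 * (a * X) ^ 2 + 2 * (a * ((2 ^ N + 1) * r ^ N * K)) ^ 2).
  { assert (u a ^ 2 = Rabs (u a) ^ 2) by (rewrite <- Rsqr_pow2, Rsqr_abs, Rsqr_pow2; auto).
    rewrite H.
    assert (Hp : 0 <= a * ((2 ^ N + 1) * r ^ N * K)).
    { apply Rmult_le_pos; auto. apply Rmult_le_pos; auto. apply Rmult_le_pos.
      assert (0 < 2 ^ N) by (apply pow_lt; lra). lra. apply pow_le; lra. }
    assert (Hab : Rabs (u a) ^ 2 <= (a * X + a * ((2 ^ N + 1) * r ^ N * K)) ^ 2).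
    { apply pow_le_mono; auto. apply Rabs_pos. }
    assert (Hq := pow2_ge_0 (a * X - a * ((2 ^ N + 1) * r ^ N * K))). nra. }
  assert (HCS : X ^ 2 <= 2 ^ N * sumj (fun j => bin N j * u (a + INR j * t) ^ 2 / INR j ^ 2) N / t0 ^ 2).
  { unfold X.
    eapply Rle_trans; [apply sumj_CS; intros; apply bin_nonneg|].
    apply Rle_trans with (2 ^ N * sumj (fun j => bin N j * (Rabs (u (a + INR j * t)) / (INR j * t0)) ^ 2) N).
    - apply Rmult_le_compat_r.
      + apply sumj_nonneg; intros; apply Rmult_le_pos; [apply bin_nonneg|apply pow2_ge_0].
      + apply bin_sum_le.
    - unfold Rdiv at 2. rewrite Rmult_assoc. apply Rmult_le_compat_l. left; apply pow_lt; lra.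
      rewrite Rmult_comm, <- sumj_scal. right. apply sumj_ext. intros j Hj.
      assert (1 <= INR j) by (apply (le_INR 1); lia).
      rewrite <- Rsqr_pow2 with (Rabs _ / _). unfold Rsqr. unfold Rdiv.
      rewrite Rinv_mult.
      replace (Rabs (u (a + INR j * t)) * (/ INR j * / t0) * (Rabs (u (a + INR j * t)) * (/ INR j * / t0)))
        with (Rabs (u (a + INR j * t)) * Rabs (u (a + INR j * t)) * (/ INR j) ^ 2 * (/ t0) ^ 2) by ring.
      rewrite <- Rabs_mult, Rabs_right by (apply Rle_ge, Rle_0_sqr).
      rewrite pow_inv, pow_inv. simpl. field. lra. }
  assert (H2N : (2 ^ N + 1) ^ 2 <= 4 ^ S N).
  { assert (1 <= 2 ^ N) by (apply pow_R1_Rle; lra).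
    assert (E : 4 ^ N = (2 ^ N) ^ 2).
    { replace 4 with (2 ^ 2) by ring. rewrite <- !pow_mult. f_equal. lia. }
    change (4 ^ S N) with (4 * 4 ^ N). rewrite E. nra. }
  eapply Rle_trans; [exact Hsq|].
  apply Rplus_le_compat.
  - replace (2 * (a * X) ^ 2) with (2 * a ^ 2 * X ^ 2) by ring.
    replace (2 * a ^ 2 * 2 ^ N / t0 ^ 2 * sumj (fun j => bin N j * u (a + INR j * t) ^ 2 / INR j ^ 2) N)
      with (2 * a ^ 2 * (2 ^ N * sumj (fun j => bin N j * u (a + INR j * t) ^ 2 / INR j ^ 2) N / t0 ^ 2))
      by (field; lra).
    apply Rmult_le_compat_l; auto. apply Rmult_le_pos; [lra|apply pow2_ge_0].
  - replace (2 * (a * ((2 ^ N + 1) * r ^ N * K)) ^ 2) with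
      (2 * a ^ 2 * (2 ^ N + 1) ^ 2 * (r ^ N) ^ 2 * K ^ 2) by ring.
    rewrite <- pow_mult. replace (N * 2)%nat with (2 * N)%nat by lia.
    apply Rmult_le_compat_r; [apply pow2_ge_0|].
    apply Rmult_le_compat_r; [apply pow_le; lra|].
    apply Rmult_le_compat_l; auto. apply Rmult_le_pos; [lra|apply pow2_ge_0].
Qed.

Lemma RInt_lin_sub (f : R -> R) a j t0 t1 r : CR f -> (forall x, 0 <= f x) ->
  (1 <= j)%nat -> 0 <= a -> 0 <= t0 <= t1 -> a + INR j * t1 <= r ->
  RInt (fun t => f (a + INR j * t)) t0 t1 <= / INR j * RInt f 0 r.
Proof.
  intros Hf Hp Hj Ha Ht Hr.
  assert (Hj1 : 1 <= INR j) by (apply (le_INR 1); lia).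
  assert (E : RInt (fun t => f (a + INR j * t)) t0 t1 =
              / INR j * RInt (fun y => INR j * f (INR j * y + a)) t0 t1).
  { rewrite (RInt_scal_R (fun y => f (INR j * y + a))) by (apply exR; apply CR_lin; auto).
    rewrite <- Rmult_assoc, Rinv_l, Rmult_1_l by lra.
    apply RInt_ext_R. intros; f_equal; ring. }
  rewrite E, RInt_comp_lin_R by (apply exR; auto).
  apply Rmult_le_compat_l. left; apply Rinv_0_lt_compat; lra.
  apply RInt_sub; auto; try (intros; apply Hp).
  - assert (0 <= INR j * t0) by (apply Rmult_le_pos; lra). lra.
  - apply Rplus_le_compat_r. apply Rmult_le_compat_l; lra.
  - lra.
Qed.

Lemma avg_term (u : R -> R) N j a t0 t1 r : CR u -> (1 <= j)%nat -> 0 <= a -> 0 <= t0 <= t1 ->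
  a + INR j * t1 <= r ->
  RInt (fun t => bin N j * u (a + INR j * t) ^ 2 / INR j ^ 2) t0 t1 <=
  bin N j / INR j ^ 3 * RInt (fun y => u y ^ 2) 0 r.
Proof.
  intros Hu Hj Ha Ht Hr.
  assert (Hj1 : 1 <= INR j) by (apply (le_INR 1); lia).
  rewrite (RInt_ext_R _ (fun t => (bin N j / INR j ^ 2) * (fun y => u y ^ 2) (a + INR j * t)))
    by (intros; unfold Rdiv; ring).
  rewrite RInt_scal_R.
  2:{ apply exR. apply CR_ext with (fun t => (fun y => u y ^ 2) (INR j * t + a)).
      intros x; replace (INR j * x + a) with (a + INR j * x) by ring; reflexivity.
      apply (CR_lin (fun y => u y ^ 2)). apply CR_pow; auto. }
  apply Rle_trans with (bin N j / INR j ^ 2 * (/ INR j * RInt (fun y => u y ^ 2) 0 r)).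
  - apply Rmult_le_compat_l. unfold Rdiv; apply Rmult_le_pos; [apply bin_nonneg|].
    left; apply Rinv_0_lt_compat, pow_lt; lra.
    apply (RInt_lin_sub (fun y => u y ^ 2) a j t0 t1 r); auto.
    + apply CR_pow; auto.
    + intros; apply pow2_ge_0.
  - assert (EE : forall I : R, bin N j / INR j ^ 2 * (/ INR j * I) = bin N j / INR j ^ 3 * I)
      by (intros; field; lra).
    rewrite EE. apply Rle_refl.
Qed.

Lemma avg_alg (a r p N U X C2 : R) (n : nat) :
  0 < r -> 1 <= p ->
  r / (3 * p) * X <= 2 * a ^ 2 * 2 ^ n / (2 * r / (3 * p)) ^ 2 * (192 * 2 ^ n / p ^ 3 * U) + r / (3 * p) * C2 ->
  X <= 2592 * 4 ^ n * a ^ 2 * U / r ^ 3 + C2.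
Proof.
  intros Hr Hp H.
  assert (E4 : 4 ^ n = 2 ^ n * 2 ^ n) by (replace 4 with (2 * 2) by ring; apply Rpow_mult_distr).
  assert (E : 2 * a ^ 2 * 2 ^ n / (2 * r / (3 * p)) ^ 2 * (192 * 2 ^ n / p ^ 3 * U) + r / (3 * p) * C2
     = r / (3 * p) * (2592 * 4 ^ n * a ^ 2 * U / r ^ 3 + C2)).
  { rewrite E4. field. lra. }
  rewrite E in H.
  apply Rmult_le_reg_l with (r / (3 * p)); [apply Rdiv_lt_0_compat; lra|exact H].
Qed.

Lemma averaged (u Q : R -> R) N L K r a U :
  CR u -> 0 <= K -> 0 < r -> r <= L -> 0 <= a -> a <= r / INR (S N) ->
  U = RInt (fun x => u x ^ 2) 0 r ->
  (forall y, 0 <= y <= L -> Rabs (u y - y * Q y) <= y ^ S N * K) ->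
  (forall t, Q a = - sumj (fun j => (-1) ^ j * bin N j * Q (a + INR j * t)) N) ->
  u a ^ 2 <= 2592 * 4 ^ N * a ^ 2 * U / r ^ 3 + 2 * a ^ 2 * 4 ^ S N * r ^ (2 * N) * K ^ 2.
Proof.
  intros Hu HK Hr HrL Ha Har HU HT HQ.
  assert (Hp1 : 1 <= INR (S N)) by (apply (le_INR 1); lia).
  assert (HpN : INR (S N) = INR N + 1) by (rewrite S_INR; auto).
  set (p := INR (S N)) in *.
  set (t0 := 2 * r / (3 * p)). set (t1 := r / p).
  assert (Ht0 : 0 < t0) by (unfold t0; apply Rdiv_lt_0_compat; lra).
  assert (Ht01 : t0 < t1).
  { unfold t0, t1. apply Rmult_lt_reg_r with (3 * p); [lra|]. field_simplify; lra. }
  assert (Hgeo : a + INR N * t1 <= r).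
  { assert (INR N * t1 + t1 = r) by (unfold t1; rewrite HpN; field; lra).
    assert (a <= t1) by (unfold t1; exact Har). lra. }
  set (C1 := 2 * a ^ 2 * 2 ^ N / t0 ^ 2).
  set (C2 := 2 * a ^ 2 * 4 ^ S N * r ^ (2 * N) * K ^ 2).
  assert (Hpt : forall t, t0 <= t <= t1 ->
     u a ^ 2 <= C1 * sumj (fun j => bin N j * u (a + INR j * t) ^ 2 / INR j ^ 2) N + C2).
  { intros t Ht. apply (pointwise u Q N L K r a t t0); auto; try lra.
    assert (INR N * t <= INR N * t1) by (apply Rmult_le_compat_l; [apply pos_INR|lra]). lra. }
  assert (Hc : forall j, CR (fun t => bin N j * u (a + INR j * t) ^ 2 / INR j ^ 2)).
  { intros j. unfold Rdiv. apply CR_ext with (fun t => (bin N j * / INR j ^ 2) * (u (INR j * t + a) ^ 2)).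
    intros; replace (INR j * x + a) with (a + INR j * x) by ring; ring.
    apply CR_scal. apply CR_pow. apply CR_lin; auto. }
  assert (Hint : RInt (fun _ => u a ^ 2) t0 t1 <=
     RInt (fun t => C1 * sumj (fun j => bin N j * u (a + INR j * t) ^ 2 / INR j ^ 2) N + C2) t0 t1).
  { apply RInt_le_c; try lra. apply CR_const.
    apply CR_plus; [apply CR_scal; apply CR_sumj; auto|apply CR_const].
    auto. }
  rewrite RInt_const_R in Hint.
  rewrite RInt_plus_R in Hint by (apply exR; try apply CR_const; apply CR_scal, CR_sumj; auto).
  rewrite RInt_scal_R in Hint by (apply exR; apply CR_sumj; auto).
  rewrite RInt_const_R in Hint.
  rewrite RInt_sumj in Hint by auto.
  assert (HS : sumj (fun j => RInt (fun t => bin N j * u (a + INR j * t) ^ 2 / INR j ^ 2) t0 t1) N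
               <= sumj (fun j => bin N j / INR j ^ 3) N * U).
  { rewrite Rmult_comm, <- sumj_scal. apply sumj_le. intros j Hj.
    rewrite Rmult_comm, HU. apply avg_term; auto; try lia; try lra.
    assert (INR j * t1 <= INR N * t1) by (apply Rmult_le_compat_r; [lra|apply le_INR; lia]). lra. }
  assert (HU0 : 0 <= U) by (rewrite HU; apply RInt_nonneg_c; [lra|apply CR_pow; auto|intros; apply pow2_ge_0]).
  assert (HC1 : 0 <= C1).
  { unfold C1. unfold Rdiv. apply Rmult_le_pos. apply Rmult_le_pos. apply Rmult_le_pos. lra.
    apply pow2_ge_0. apply pow_le; lra. left; apply Rinv_0_lt_compat, pow_lt; lra. }
  assert (HY : INR (S N) * INR (S (S N)) * INR (S (S (S N))) >= p ^ 3).
  { unfold p. rewrite !S_INR. assert (0 <= INR N) by apply pos_INR. simpl. nra. }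
  assert (Hsum : sumj (fun j => bin N j / INR j ^ 3) N <= 192 * 2 ^ N / p ^ 3).
  { eapply Rle_trans; [apply (bin_cube_sum N)|]. unfold Rdiv. apply Rmult_le_compat_l.
    apply Rmult_le_pos; [lra|apply pow_le; lra].
    apply Rinv_le_contravar; [apply pow_lt; lra|lra]. }
  assert (Hfin : (t1 - t0) * u a ^ 2 <= C1 * (192 * 2 ^ N / p ^ 3 * U) + (t1 - t0) * C2).
  { eapply Rle_trans; [exact Hint|]. apply Rplus_le_compat_r. apply Rmult_le_compat_l; auto.
    eapply Rle_trans; [exact HS|]. apply Rmult_le_compat_r; auto. }
  assert (Htd : t1 - t0 = r / (3 * p)) by (unfold t1, t0; field; lra).
  rewrite Htd in Hfin. unfold C1, t0 in Hfin.
  apply (avg_alg a r p (INR N) U (u a ^ 2) C2 N); auto.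
Qed.

Lemma slice_int (u Q : R -> R) N L K r d :
  CR u -> 0 <= K -> 0 < r -> r <= L -> 0 <= d -> d <= r / INR (S N) ->
  (forall y, 0 <= y <= L -> Rabs (u y - y * Q y) <= y ^ S N * K) ->
  (forall a t, Q a = - sumj (fun j => (-1) ^ j * bin N j * Q (a + INR j * t)) N) ->
  RInt (fun a => u a ^ 2) 0 d <=
  d ^ 3 / 3 * (2592 * 4 ^ N * RInt (fun x => u x ^ 2) 0 r / r ^ 3 + 2 * 4 ^ S N * r ^ (2 * N) * K ^ 2).
Proof.
  intros Hu HK Hr HrL Hd Hdr HT HQ.
  set (A := 2592 * 4 ^ N * RInt (fun x => u x ^ 2) 0 r / r ^ 3 + 2 * 4 ^ S N * r ^ (2 * N) * K ^ 2).
  apply Rle_trans with (RInt (fun a => A * a ^ 2) 0 d).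
  - apply RInt_le_c; auto. apply CR_pow; auto. apply CR_scal, CR_pow, CR_id.
    intros a Ha.
    eapply Rle_trans.
    + apply (averaged u Q N L K r a (RInt (fun x => u x ^ 2) 0 r)); auto; lra.
    + right. unfold A. field. lra.
  - rewrite RInt_scal_R by (apply exR; apply CR_pow, CR_id).
    rewrite RInt_sq. right. field.
Qed.

Lemma component_bound (u : R -> R) N L r d :
  (forall k x, (k <= S (S N))%nat -> ex_derive_n u k x) ->
  (forall k, (k <= S (S N))%nat -> CR (Derive_n u k)) ->
  u 0 = 0 -> 0 < r -> r <= L -> 0 <= d -> d <= r / INR (S N) ->
  RInt (fun a => u a ^ 2) 0 d <=
  d ^ 3 / 3 * (2592 * 4 ^ N * RInt (fun x => u x ^ 2) 0 r / r ^ 3 +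
     2 * 4 ^ S N * r ^ (2 * N) / INR (Factorial.fact (S N)) ^ 2 *
     (2 / L * RInt (fun x => Derive_n u (S N) x ^ 2) 0 L +
      2 * L * RInt (fun x => Derive_n u (S (S N)) x ^ 2) 0 L)).
Proof.
  intros Hd Hc H0 Hr HrL Hd0 Hdr.
  assert (HL : 0 < L) by lra.
  set (V := 2 / L * RInt (fun x => Derive_n u (S N) x ^ 2) 0 L +
      2 * L * RInt (fun x => Derive_n u (S (S N)) x ^ 2) 0 L).
  assert (Hsob : forall y, 0 <= y <= L -> Derive_n u (S N) y ^ 2 <= V).
  { intros y Hy. apply (sobolev (Derive_n u (S N)) (Derive_n u (S (S N))) L); auto.
    - intros x. apply Derive_correct. apply (Hd (S (S N)) x); lia. }
  assert (HV : 0 <= V).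
  { apply Rle_trans with (Derive_n u (S N) 0 ^ 2); [apply pow2_ge_0|apply Hsob; lra]. }
  assert (Hf : 0 < INR (Factorial.fact (S N))) by (apply lt_0_INR, Factorial.lt_O_fact).
  set (K := sqrt V / INR (Factorial.fact (S N))).
  assert (HK : 0 <= K) by (unfold K; apply Rdiv_le_0_compat; [apply sqrt_pos|auto]).
  assert (HK2 : K ^ 2 = V / INR (Factorial.fact (S N)) ^ 2).
  { unfold K. unfold Rdiv. rewrite Rpow_mult_distr, pow2_sqrt by auto. rewrite pow_inv. auto. }
  set (c := fun m => Derive_n u m 0 / INR (Factorial.fact m)).
  eapply Rle_trans.
  - apply (slice_int u (polyQ c N) N L K r d); auto.
    + apply CR_ext with (Derive_n u 0); [intros; reflexivity|apply Hc; lia].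
    + intros y Hy. eapply Rle_trans.
      * apply (taylor_bound u N L V (fun k x Hk => Hd k x ltac:(lia)) H0 HV Hsob y Hy).
      * right. unfold K. unfold Rdiv. ring.
    + intros; apply Qdiff.
  - right. rewrite HK2. unfold V. field. lra.
Qed.

Lemma JC_plus f g : JC f -> JC g -> JC (fun x y => f x y + g x y).
Proof. intros H1 H2 z. apply (continuous_plus (fun w : R*R => f (fst w) (snd w)) (fun w : R*R => g (fst w) (snd w))); auto. Qed.
Lemma JC_minus f g : JC f -> JC g -> JC (fun x y => f x y - g x y).
Proof. intros H1 H2 z. apply (continuous_minus (fun w : R*R => f (fst w) (snd w)) (fun w : R*R => g (fst w) (snd w))); auto. Qed.
Lemma JC_mult f g : JC f -> JC g -> JC (fun x y => f x y * g x y).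
Proof. intros H1 H2 z. apply (continuous_mult (fun w : R*R => f (fst w) (snd w)) (fun w : R*R => g (fst w) (snd w))); auto. Qed.
Lemma JC_const c : JC (fun _ _ => c).
Proof. intros z. apply continuous_const. Qed.
Lemma JC_ext f g : (forall x y, f x y = g x y) -> JC f -> JC g.
Proof. intros H Hf z. apply (continuous_ext (fun w : R*R => f (fst w) (snd w))); auto. Qed.
Lemma JC_sq f : JC f -> JC (fun x y => f x y ^ 2).
Proof. intros H. apply JC_ext with (fun x y => f x y * f x y); [intros; ring|]. apply JC_mult; auto. Qed.
Lemma JC_x : JC (fun x y => x).
Proof. intros [x y]. apply continuous_fst. Qed.
Lemma JC_y : JC (fun x y => y).
Proof. intros [x y]. apply continuous_snd. Qed.
Lemma JC_cos f : JC f -> JC (fun x y => cos (f x y)).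
Proof. intros H z. apply (continuous_comp (fun w : R*R => f (fst w) (snd w)) cos); auto. apply continuous_cos. Qed.
Lemma JC_sin f : JC f -> JC (fun x y => sin (f x y)).
Proof.
  intros H z. apply (continuous_comp (fun w : R*R => f (fst w) (snd w)) sin); auto.
  apply continuity_pt_filterlim. apply continuity_sin.
Qed.

Lemma CR_par1 G c d : JC G -> CR (fun x => RInt (fun y => G x y) c d).
Proof. intros H x. apply param_cont; auto. Qed.
Lemma CR_par2 G a b : JC G -> CR (fun y => RInt (fun x => G x y) a b).
Proof. intros H y. apply (param_cont (fun y x => G x y)). apply JC_swap; auto. Qed.

Lemma fin_alg (D W U X k r L F : R) (N : nat) :
  0 < k -> k <= 1 / 128 -> 0 < r -> 0 < L -> 0 < F ->
  4 ^ S N * k ^ 2 = 1 / 4096 ->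
  W <= (k * r) ^ 3 / 3 * (2592 * 4 ^ N * U / r ^ 3 + 2 * 4 ^ S N * r ^ (2 * N) / F ^ 2 * X) ->
  k * r * L / 2 - W <= D ->
  U <= 2 * D + 2 * r * L ->
  r ^ (2 * S N) * X <= 768 * L * F ^ 2 ->
  k * r * L / 4 <= D.
Proof.
  intros Hk Hk1 Hr HL HF H4 HW HD HU HX.
  assert (E4 : 4 ^ S N = 4 * 4 ^ N) by reflexivity.
  assert (Hr2 : r ^ (2 * S N) = r ^ (2 * N) * r ^ 2).
  { replace (2 * S N)%nat with (2 * N + 2)%nat by lia. apply pow_add. }
  assert (Hrp : 0 < r ^ (2 * N)) by (apply pow_lt; lra).
  assert (T1 : (k * r) ^ 3 / 3 * (2592 * 4 ^ N * U / r ^ 3) = 27 * k / 512 * U).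
  { assert (4 ^ N * k ^ 2 = 1 / 16384) by (rewrite E4 in H4; lra).
    replace ((k * r) ^ 3 / 3 * (2592 * 4 ^ N * U / r ^ 3)) with (864 * k * U * (4 ^ N * k ^ 2)) by (field; lra).
    rewrite H. field. }
  assert (T2 : (k * r) ^ 3 / 3 * (2 * 4 ^ S N * r ^ (2 * N) / F ^ 2 * X) =
               k * r * (r ^ (2 * S N) * X) / (6144 * F ^ 2)).
  { rewrite Hr2.
    replace ((k * r) ^ 3 / 3 * (2 * 4 ^ S N * r ^ (2 * N) / F ^ 2 * X)) with
      (2 / 3 * (4 ^ S N * k ^ 2) * k * r ^ 3 * r ^ (2 * N) * X / F ^ 2) by (field; lra).
    rewrite H4. field. lra. }
  assert (T2b : k * r * (r ^ (2 * S N) * X) / (6144 * F ^ 2) <= k * r * L / 8).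
  { apply Rle_trans with (k * r * (768 * L * F ^ 2) / (6144 * F ^ 2)).
    - unfold Rdiv. apply Rmult_le_compat_r. left; apply Rinv_0_lt_compat; nra.
      apply Rmult_le_compat_l; auto. nra.
    - right. field. lra. }
  rewrite Rmult_plus_distr_l, T1, T2 in HW.
  assert (HU27 : 27 * k / 512 * U <= 27 * k / 512 * (2 * D + 2 * r * L)).
  { apply Rmult_le_compat_l; auto. lra. }
  assert (Hkr : 0 < k * r * L) by (repeat apply Rmult_lt_0_compat; auto).
  assert (Hfin : D * (1 + 27 * k / 256) >= 69 / 256 * (k * r * L)) by nra.
  nra.
Qed.

Lemma RInt_lin3 (u1 u2 u3 : R -> R) A1 A2 A3 a b : CR u1 -> CR u2 -> CR u3 ->
  RInt (fun x => A1 * u1 x + A2 * u2 x + A3 * u3 x) a b =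
  A1 * RInt u1 a b + A2 * RInt u2 a b + A3 * RInt u3 a b.
Proof.
  intros H1 H2 H3.
  rewrite RInt_plus_R; try apply exR.
  rewrite RInt_plus_R; try apply exR.
  rewrite !RInt_scal_R; try apply exR; auto.
  all: try (apply CR_scal; auto).
  apply CR_plus; apply CR_scal; auto.
Qed.

Lemma RInt_affine (u : R -> R) A B a b : CR u ->
  RInt (fun x => A * u x + B) a b = A * RInt u a b + B * (b - a).
Proof.
  intros H. rewrite RInt_plus_R; try apply exR.
  rewrite RInt_scal_R, RInt_const_R by (apply exR; auto).
  match goal with |- ?A = ?B => change (@eq R A B) end; ring.
  apply CR_scal; auto. apply CR_const.
Qed.

Lemma JC_D0 (g : R -> R -> R) : JC (fun x1 x2 => Derive_n (fun t => g t x2) 0 x1) -> JC g.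
Proof. intros H. apply JC_ext with (fun x1 x2 => Derive_n (fun t => g t x2) 0 x1); auto. Qed.

Lemma core2D (gr gi cs sn : R -> R -> R) (N : nat) (L r : R) :
  (forall k x2 x, (k <= S (S N))%nat -> ex_derive_n (fun t => gr t x2) k x) ->
  (forall k x2 x, (k <= S (S N))%nat -> ex_derive_n (fun t => gi t x2) k x) ->
  (forall k, (k <= S (S N))%nat -> JC (fun x1 x2 => Derive_n (fun t => gr t x2) k x1)) ->
  (forall k, (k <= S (S N))%nat -> JC (fun x1 x2 => Derive_n (fun t => gi t x2) k x1)) ->
  (forall x2, - (L / 2) <= x2 <= L / 2 -> gr 0 x2 = 0) ->
  (forall x2, - (L / 2) <= x2 <= L / 2 -> gi 0 x2 = 0) ->
  JC cs -> JC sn -> (forall x y, cs x y ^ 2 + sn x y ^ 2 = 1) ->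
  0 < r -> r <= L ->
  r ^ (2 * S N) *
    (2 / L * RInt (fun x1 => RInt (fun x2 => Derive_n (fun t => gr t x2) (S N) x1 ^ 2 +
                                             Derive_n (fun t => gi t x2) (S N) x1 ^ 2) (- (L / 2)) (L / 2)) 0 L +
     2 * L * RInt (fun x1 => RInt (fun x2 => Derive_n (fun t => gr t x2) (S (S N)) x1 ^ 2 +
                                             Derive_n (fun t => gi t x2) (S (S N)) x1 ^ 2) (- (L / 2)) (L / 2)) 0 L)
   <= 768 * L * INR (Factorial.fact (S N)) ^ 2 ->
  / (64 * 2 ^ S N) * r * L / 4 <=
  RInt (fun x1 => RInt (fun x2 => (gr x1 x2 - cs x1 x2) ^ 2 + (gi x1 x2 - sn x1 x2) ^ 2) (- (L / 2)) (L / 2)) 0 L.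
Proof.
  intros HdR HdI HcR HcI H0R H0I Hcs Hsn Hcs1 Hr HrL HX.
  set (c0 := - (L / 2)). set (c1 := L / 2).
  assert (HL : 0 < L) by lra.
  assert (Hc01 : c0 <= c1) by (unfold c0, c1; lra).
  assert (Hlen : c1 - c0 = L) by (unfold c0, c1; lra).
  set (k := / (64 * 2 ^ S N)).
  assert (H2p : 0 < 2 ^ S N) by (apply pow_lt; lra).
  assert (Hk : 0 < k) by (unfold k; apply Rinv_0_lt_compat; lra).
  assert (HpN : INR (S N) <= 2 ^ S N).
  { clear. generalize (S N). intros n. induction n as [|n IH]. simpl; lra.
    rewrite S_INR. simpl. assert (1 <= 2 ^ n) by (apply pow_R1_Rle; lra). lra. }
  assert (Hp1 : 1 <= INR (S N)) by (apply (le_INR 1); lia).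
  assert (Hk1 : k <= 1 / 128).
  { unfold k. assert (2 <= 2 ^ S N) by (simpl; assert (1 <= 2 ^ N) by (apply pow_R1_Rle; lra); lra).
    apply Rle_trans with (/ 128). apply Rinv_le_contravar; lra. lra. }
  set (d := k * r).
  assert (Hd0 : 0 < d) by (unfold d; apply Rmult_lt_0_compat; auto).
  assert (Hdr : d <= r / INR (S N)).
  { unfold d, k. unfold Rdiv. rewrite Rmult_comm. apply Rmult_le_compat_l; [lra|].
    apply Rinv_le_contravar; lra. }
  assert (HdL : d <= L).
  { apply Rle_trans with (r / INR (S N)); auto. apply Rle_trans with r; auto.
    unfold Rdiv. rewrite <- (Rmult_1_r r) at 2. apply Rmult_le_compat_l; [lra|].
    rewrite <- Rinv_1. apply Rinv_le_contravar; lra. }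
  assert (JR : JC gr) by (apply JC_D0, HcR; lia).
  assert (JI : JC gi) by (apply JC_D0, HcI; lia).
  set (Gf := fun x1 x2 => gr x1 x2 ^ 2 + gi x1 x2 ^ 2).
  set (Gfe := fun x1 x2 => (gr x1 x2 - cs x1 x2) ^ 2 + (gi x1 x2 - sn x1 x2) ^ 2).
  set (Hp := fun m x1 x2 => Derive_n (fun t => gr t x2) m x1 ^ 2 + Derive_n (fun t => gi t x2) m x1 ^ 2).
  assert (JGf : JC Gf) by (apply JC_plus; apply JC_sq; auto).
  assert (JGfe : JC Gfe) by (apply JC_plus; apply JC_sq, JC_minus; auto).
  assert (JHp : forall m, (m <= S (S N))%nat -> JC (Hp m)).
  { intros m Hm. apply JC_plus; apply JC_sq; [apply HcR|apply HcI]; auto. }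
  assert (Hpt1 : forall x y, Gf x y <= 2 * Gfe x y + 2).
  { intros x y. unfold Gf, Gfe. specialize (Hcs1 x y).
    assert (A1 := pow2_ge_0 (gr x y - 2 * cs x y)).
    assert (A2 := pow2_ge_0 (gi x y - 2 * sn x y)). nra. }
  assert (Hpt2 : forall x y, 1 / 2 - Gf x y <= Gfe x y).
  { intros x y. unfold Gf, Gfe. specialize (Hcs1 x y).
    assert (A1 := pow2_ge_0 (2 * gr x y - cs x y)).
    assert (A2 := pow2_ge_0 (2 * gi x y - sn x y)). nra. }
  assert (HGfe0 : forall x y, 0 <= Gfe x y).
  { intros; unfold Gfe; assert (A1 := pow2_ge_0 (gr x y - cs x y));
    assert (A2 := pow2_ge_0 (gi x y - sn x y)); lra. }
  set (D := RInt (fun x1 => RInt (fun x2 => Gfe x1 x2) c0 c1) 0 L).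
  set (U := RInt (fun x1 => RInt (fun x2 => Gf x1 x2) c0 c1) 0 r).
  set (Wx := RInt (fun x1 => RInt (fun x2 => Gf x1 x2) c0 c1) 0 d).
  set (Ip := RInt (fun x1 => RInt (fun x2 => Hp (S N) x1 x2) c0 c1) 0 L).
  set (Ip1 := RInt (fun x1 => RInt (fun x2 => Hp (S (S N)) x1 x2) c0 c1) 0 L).
  set (cf := 2 * 4 ^ S N * r ^ (2 * N) / INR (Factorial.fact (S N)) ^ 2).
  assert (Hslice : forall x2, c0 <= x2 <= c1 ->
    RInt (fun a => Gf a x2) 0 d <=
    (d ^ 3 / 3 * (2592 * 4 ^ N / r ^ 3)) * RInt (fun x => Gf x x2) 0 r
    + (d ^ 3 / 3 * cf * (2 / L)) * RInt (fun x => Hp (S N) x x2) 0 L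
    + (d ^ 3 / 3 * cf * (2 * L)) * RInt (fun x => Hp (S (S N)) x x2) 0 L).
  { intros x2 Hx2.
    assert (BR := component_bound (fun t => gr t x2) N L r d (fun k x Hk => HdR k x2 x Hk)
       (fun k Hk => JC_slice1 _ (HcR k Hk) x2) (H0R x2 Hx2) Hr HrL ltac:(lra) Hdr).
    assert (BI := component_bound (fun t => gi t x2) N L r d (fun k x Hk => HdI k x2 x Hk)
       (fun k Hk => JC_slice1 _ (HcI k Hk) x2) (H0I x2 Hx2) Hr HrL ltac:(lra) Hdr).
    assert (CRr : forall m, (m <= S (S N))%nat -> CR (fun x => Derive_n (fun t => gr t x2) m x ^ 2)).
    { intros m Hm. apply CR_pow. exact (JC_slice1 _ (HcR m Hm) x2). }
    assert (CRi : forall m, (m <= S (S N))%nat -> CR (fun x => Derive_n (fun t => gi t x2) m x ^ 2)).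
    { intros m Hm. apply CR_pow. exact (JC_slice1 _ (HcI m Hm) x2). }
    assert (Esum : forall m a b, (m <= S (S N))%nat -> RInt (fun x => Hp m x x2) a b =
        RInt (fun x => Derive_n (fun t => gr t x2) m x ^ 2) a b + RInt (fun x => Derive_n (fun t => gi t x2) m x ^ 2) a b).
    { intros m a b Hm. unfold Hp. apply RInt_plus_R; apply exR; auto. }
    assert (Esum0 : forall a b, RInt (fun x => Gf x x2) a b =
        RInt (fun x => gr x x2 ^ 2) a b + RInt (fun x => gi x x2 ^ 2) a b).
    { intros a b. unfold Gf. apply RInt_plus_R; apply exR; apply CR_pow;
      [exact (JC_slice1 _ JR x2)|exact (JC_slice1 _ JI x2)]. }
    rewrite Esum0, Esum0, (Esum (S N)), (Esum (S (S N))) by lia.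
    fold cf in BR, BI.
    unfold cf in *. lra. }
  assert (Hint : RInt (fun x2 => RInt (fun a => Gf a x2) 0 d) c0 c1 <=
     RInt (fun x2 => (d ^ 3 / 3 * (2592 * 4 ^ N / r ^ 3)) * RInt (fun x => Gf x x2) 0 r
    + (d ^ 3 / 3 * cf * (2 / L)) * RInt (fun x => Hp (S N) x x2) 0 L
    + (d ^ 3 / 3 * cf * (2 * L)) * RInt (fun x => Hp (S (S N)) x x2) 0 L) c0 c1).
  { apply RInt_le_c; auto. apply CR_par2; auto.
    apply CR_plus; [apply CR_plus|]; apply CR_scal, CR_par2; auto. }
  rewrite RInt_lin3 in Hint by (apply CR_par2; auto).
  assert (EW : RInt (fun x2 => RInt (fun a => Gf a x2) 0 d) c0 c1 = Wx)
    by (unfold Wx; symmetry; apply (Fubini Gf 0 d c0 c1 JGf)).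
  assert (EU : RInt (fun x2 => RInt (fun x => Gf x x2) 0 r) c0 c1 = U)
    by (unfold U; symmetry; apply (Fubini Gf 0 r c0 c1 JGf)).
  assert (EI : RInt (fun x2 => RInt (fun x => Hp (S N) x x2) 0 L) c0 c1 = Ip)
    by (unfold Ip; symmetry; apply (Fubini (Hp (S N)) 0 L c0 c1 (JHp (S N) ltac:(lia)))).
  assert (EI1 : RInt (fun x2 => RInt (fun x => Hp (S (S N)) x x2) 0 L) c0 c1 = Ip1)
    by (unfold Ip1; symmetry; apply (Fubini (Hp (S (S N))) 0 L c0 c1 (JHp (S (S N)) ltac:(lia)))).
  rewrite EW, EU, EI, EI1 in Hint.
  assert (HD1 : d * L / 2 - Wx <= D).
  { apply Rle_trans with (RInt (fun x1 => RInt (fun x2 => Gfe x1 x2) c0 c1) 0 d).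
    - apply Rle_trans with (RInt (fun x1 => (-1) * RInt (fun x2 => Gf x1 x2) c0 c1 + L / 2) 0 d).
      + rewrite RInt_affine by (apply CR_par1; auto). fold Wx. lra.
      + apply RInt_le_c; try lra.
        * apply CR_plus; [apply CR_scal, CR_par1; auto|apply CR_const].
        * apply CR_par1; auto.
        * intros x Hx. apply Rle_trans with (RInt (fun x2 => (-1) * Gf x x2 + 1 / 2) c0 c1).
          { rewrite RInt_affine by (exact (JC_slice2 Gf JGf x)). rewrite Hlen.
            change (RInt (Gf x) c0 c1) with (RInt (fun x2 => Gf x x2) c0 c1). lra. }
          apply RInt_le_c; auto.
          apply CR_plus; [apply CR_scal; exact (JC_slice2 Gf JGf x)|apply CR_const].
          exact (JC_slice2 Gfe JGfe x). intros y _. specialize (Hpt2 x y). lra.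
    - apply RInt_sub; try lra. apply CR_par1; auto.
      intros x _. apply RInt_nonneg_c; auto. exact (JC_slice2 Gfe JGfe x). }
  assert (HU : U <= 2 * D + 2 * r * L).
  { apply Rle_trans with (RInt (fun x1 => 2 * RInt (fun x2 => Gfe x1 x2) c0 c1 + 2 * L) 0 r).
    - apply RInt_le_c; try lra. apply CR_par1; auto.
      apply CR_plus; [apply CR_scal, CR_par1; auto|apply CR_const].
      intros x _. apply Rle_trans with (RInt (fun x2 => 2 * Gfe x x2 + 2) c0 c1).
      + apply RInt_le_c; [lra|exact (JC_slice2 Gf JGf x)| |intros; apply Hpt1].
        apply CR_plus; [apply CR_scal; exact (JC_slice2 Gfe JGfe x)|apply CR_const].
      + rewrite RInt_affine by (exact (JC_slice2 Gfe JGfe x)). rewrite Hlen.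
        change (RInt (Gfe x) c0 c1) with (RInt (fun x2 => Gfe x x2) c0 c1). lra.
    - rewrite RInt_affine by (apply CR_par1; auto).
      assert (RInt (fun x1 => RInt (fun x2 => Gfe x1 x2) c0 c1) 0 r <= D).
      { apply RInt_sub; try lra. apply CR_par1; auto.
        intros x _. apply RInt_nonneg_c; auto. exact (JC_slice2 Gfe JGfe x). }
      lra. }
  assert (H4 : 4 ^ S N * k ^ 2 = 1 / 4096).
  { unfold k. assert (E : 4 ^ S N = 2 ^ S N * 2 ^ S N)
      by (replace 4 with (2 * 2) by ring; apply Rpow_mult_distr).
    rewrite E. field. lra. }
  assert (HF : 0 < INR (Factorial.fact (S N))) by (apply lt_0_INR, Factorial.lt_O_fact).
  apply (fin_alg D Wx U (2 / L * Ip + 2 * L * Ip1) k r L (INR (Factorial.fact (S N))) N); auto.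
  - eapply Rle_trans; [exact Hint|]. right. unfold d, cf. field. lra.
Qed.

Lemma Dn_pderiv (g : R -> R -> R) k x1 x2 :
  Derive_n (fun t => g t x2) k x1 = pderiv (repeat true k) g x1 x2.
Proof.
  revert x1. induction k; intros x1; simpl; auto.
  apply Derive_ext. intros t. apply IHk.
Qed.

Lemma Ck_exdn m (g : R -> R -> R) : Ck_R2 m g ->
  forall k x2 x, (k <= m)%nat -> ex_derive_n (fun t => g t x2) k x.
Proof.
  intros [H1 H2] k x2 x Hk. destruct k as [|k]; simpl; auto.
  apply ex_derive_ext with (fun t => pderiv (repeat true k) g t x2).
  - intros t. symmetry. apply Dn_pderiv.
  - apply (proj1 (H1 (repeat true k) ltac:(rewrite repeat_length; lia) x x2)).
Qed.

Lemma Ck_JC m (g : R -> R -> R) : Ck_R2 m g ->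
  forall k, (k <= m)%nat -> JC (fun x1 x2 => Derive_n (fun t => g t x2) k x1).
Proof.
  intros [H1 H2] k Hk z.
  apply continuous_ext with (fun w : R * R => pderiv (repeat true k) g (fst w) (snd w)).
  - intros w. symmetry. apply Dn_pderiv.
  - apply H2. rewrite repeat_length; lia.
Qed.

Lemma ln_le_inv a b : 0 < a -> 0 < b -> ln a <= ln b -> a <= b.
Proof.
  intros Ha Hb H. destruct (Rle_lt_dec a b); auto.
  assert (ln b < ln a) by (apply ln_increasing; auto). lra.
Qed.

Lemma fact_ineq p : (1 <= p)%nat -> 16 ^ p <= 4 * 9 ^ p * INR (Factorial.fact p).
Proof.
  intros Hp. induction Hp.
  - simpl. lra.
  - rewrite fact_simpl, mult_INR. simpl pow.
    assert (H1 : 2 <= INR (S m)) by (apply (le_INR 2); lia).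
    assert (0 < INR (Factorial.fact m)) by (apply lt_0_INR, Factorial.lt_O_fact).
    assert (0 <= 9 ^ m) by (apply pow_le; lra).
    assert (0 <= 4 * 9 ^ m * INR (Factorial.fact m)) by (repeat apply Rmult_le_pos; lra).
    nra.
Qed.

Lemma ln_facts : ln 4 = 2 * ln 2 /\ ln 6 = ln 2 + ln 3 /\ ln 36 = 2 * ln 2 + 2 * ln 3 /\
  ln 64 = 6 * ln 2 /\ ln 96 = 5 * ln 2 + ln 3 /\ ln 16 = 4 * ln 2 /\ ln 9 = 2 * ln 3.
Proof.
  assert (P2 : ln (2 ^ 2) = INR 2 * ln 2) by (apply ln_pow; lra).
  assert (P4 : ln (2 ^ 4) = INR 4 * ln 2) by (apply ln_pow; lra).
  assert (P5 : ln (2 ^ 5) = INR 5 * ln 2) by (apply ln_pow; lra).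
  assert (P6 : ln (2 ^ 6) = INR 6 * ln 2) by (apply ln_pow; lra).
  assert (P9 : ln (3 ^ 2) = INR 2 * ln 3) by (apply ln_pow; lra).
  assert (M6 : ln (2 * 3) = ln 2 + ln 3) by (apply ln_mult; lra).
  assert (M36 : ln (6 * 6) = ln 6 + ln 6) by (apply ln_mult; lra).
  assert (M96 : ln (32 * 3) = ln 32 + ln 3) by (apply ln_mult; lra).
  simpl INR in *.
  replace (2 ^ 2) with 4 in P2 by ring. replace (2 ^ 4) with 16 in P4 by ring.
  replace (2 ^ 5) with 32 in P5 by ring. replace (2 ^ 6) with 64 in P6 by ring.
  replace (3 ^ 2) with 9 in P9 by ring. replace (2 * 3) with 6 in M6 by ring.
  replace (6 * 6) with 36 in M36 by ring. replace (32 * 3) with 96 in M96 by ring.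
  repeat split; lra.
Qed.

Lemma finalA (lam : R) (p : nat) : 0 < lam -> (1 <= p)%nat ->
  1 / 36 * (Rpower 4 (- INR p - 5 / 2) * / lam) <=
  / (64 * 2 ^ p) * (1 / (2 * sqrt lam)) * (1 / (2 * sqrt lam)) / 4.
Proof.
  intros Hl Hp.
  assert (Hs : 0 < sqrt lam) by (apply sqrt_lt_R0; auto).
  assert (H2p : 0 < 2 ^ p) by (apply pow_lt; lra).
  assert (HR : 0 < Rpower 4 (- INR p - 5 / 2)) by (unfold Rpower; apply exp_pos).
  apply ln_le_inv.
  - apply Rmult_lt_0_compat; [lra|]. apply Rmult_lt_0_compat; auto. apply Rinv_0_lt_compat; auto.
  - unfold Rdiv. repeat apply Rmult_lt_0_compat; try lra; apply Rinv_0_lt_compat; try lra.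
  - destruct ln_facts as (l4 & l6 & l36 & l64 & l96 & l16 & l9).
    assert (Hsq : ln (sqrt lam) = / 2 * ln lam) by (rewrite <- Rpower_sqrt by auto; apply ln_Rpower).
    assert (Hp2 : ln (2 ^ p) = INR p * ln 2) by (apply ln_pow; lra).
    replace (1 / 36 * (Rpower 4 (- INR p - 5 / 2) * / lam)) with (/ 36 * Rpower 4 (- INR p - 5 / 2) * / lam) by (field; lra).
    replace (/ (64 * 2 ^ p) * (1 / (2 * sqrt lam)) * (1 / (2 * sqrt lam)) / 4)
      with (/ 64 * / 2 ^ p * / 2 * / sqrt lam * / 2 * / sqrt lam * / 4) by (field; lra).
    rewrite !ln_mult; try (apply Rinv_0_lt_compat; lra); try lra;
      repeat (apply Rmult_lt_0_compat; try (apply Rinv_0_lt_compat; lra)); try lra.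
    rewrite !ln_Rinv by lra. rewrite ln_Rpower, Hsq, Hp2, l4, l36, l64.
    replace (ln 4) with (2 * ln 2) by (symmetry; exact l4).
    assert (L2 : 0 < ln 2) by (rewrite <- ln_1; apply ln_increasing; lra).
    assert (L23 : ln 2 < ln 3) by (apply ln_increasing; lra).
    assert (HP : 1 <= INR p) by (apply (le_INR 1); auto).
    assert (0 <= (INR p - 1) * ln 2) by (apply Rmult_le_pos; lra).
    lra.
Qed.

Lemma finalB (lam B2 : R) (p : nat) : 0 < lam -> 0 < B2 -> (1 <= p)%nat ->
  1 / 36 * (Rpower 4 (- (INR p / 2) - 3 / 2) * Rpower 6 (1 / (2 * INR p)) *
            Rpower B2 (- (1 / (2 * INR p))) * Rpower lam (-1 - 1 / INR p)) <=
  / (64 * 2 ^ p) * Rpower (96 * INR (Factorial.fact p) ^ 2 / (lam ^ S (S p) * B2)) (1 / (2 * INR p))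
    * (1 / (2 * sqrt lam)) / 4.
Proof.
  intros Hl HB Hp.
  assert (Hs : 0 < sqrt lam) by (apply sqrt_lt_R0; auto).
  assert (H2p : 0 < 2 ^ p) by (apply pow_lt; lra).
  assert (HF : 0 < INR (Factorial.fact p)) by (apply lt_0_INR, Factorial.lt_O_fact).
  assert (HP : 1 <= INR p) by (apply (le_INR 1); auto).
  assert (HlS : 0 < lam ^ S (S p)) by (apply pow_lt; auto).
  set (X := 96 * INR (Factorial.fact p) ^ 2 / (lam ^ S (S p) * B2)).
  assert (HX : 0 < X).
  { unfold X. apply Rdiv_lt_0_compat. apply Rmult_lt_0_compat; [lra|apply pow_lt; auto].
    apply Rmult_lt_0_compat; auto. }
  assert (Pos : forall a y, 0 < Rpower a y) by (intros; unfold Rpower; apply exp_pos).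
  apply ln_le_inv.
  - repeat apply Rmult_lt_0_compat; auto; lra.
  - unfold Rdiv. repeat apply Rmult_lt_0_compat; auto; try lra; apply Rinv_0_lt_compat; lra.
  - destruct ln_facts as (l4 & l6 & l36 & l64 & l96 & l16 & l9).
    assert (Hsq : ln (sqrt lam) = / 2 * ln lam) by (rewrite <- Rpower_sqrt by auto; apply ln_Rpower).
    assert (Hp2 : ln (2 ^ p) = INR p * ln 2) by (apply ln_pow; lra).
    assert (HlnX : ln X = ln 96 + 2 * ln (INR (Factorial.fact p)) - (INR (S (S p)) * ln lam + ln B2)).
    { assert (A1 : 0 < INR (Factorial.fact p) ^ 2) by (apply pow_lt; auto).
      assert (A2 : 0 < 96 * INR (Factorial.fact p) ^ 2) by lra.
      assert (A3 : 0 < lam ^ S (S p) * B2) by (apply Rmult_lt_0_compat; auto).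
      assert (A4 : 0 < / (lam ^ S (S p) * B2)) by (apply Rinv_0_lt_compat; auto).
      unfold X. unfold Rdiv. rewrite ln_mult, ln_mult, ln_Rinv, ln_mult, ln_pow, ln_pow; auto; try lra. }
    replace (1 / 36 * (Rpower 4 (- (INR p / 2) - 3 / 2) * Rpower 6 (1 / (2 * INR p)) *
            Rpower B2 (- (1 / (2 * INR p))) * Rpower lam (-1 - 1 / INR p)))
      with (/ 36 * Rpower 4 (- (INR p / 2) - 3 / 2) * Rpower 6 (1 / (2 * INR p)) *
            Rpower B2 (- (1 / (2 * INR p))) * Rpower lam (-1 - 1 / INR p)) by (field; lra).
    replace (/ (64 * 2 ^ p) * Rpower X (1 / (2 * INR p)) * (1 / (2 * sqrt lam)) / 4)
      with (/ 64 * / 2 ^ p * Rpower X (1 / (2 * INR p)) * / 2 * / sqrt lam * / 4) by (field; lra).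
    rewrite !ln_mult; try (apply Rinv_0_lt_compat; lra); auto; try lra;
      repeat (apply Rmult_lt_0_compat; auto; try (apply Rinv_0_lt_compat; lra)); try lra.
    rewrite !ln_Rinv by lra. rewrite !ln_Rpower, Hsq, Hp2, HlnX.
    rewrite l4, l6, l36, l64, l96. rewrite S_INR, S_INR.
    assert (Hfi := fact_ineq p Hp).
    assert (Hln : ln (16 ^ p) <= ln (4 * 9 ^ p * INR (Factorial.fact p))).
    { destruct (Rle_lt_or_eq_dec _ _ Hfi) as [Hlt|Heq].
      - left. apply ln_increasing; auto. apply pow_lt; lra.
      - rewrite Heq. lra. }
    assert (H9p : 0 < 9 ^ p) by (apply pow_lt; lra).
    rewrite ln_mult, ln_mult, ln_pow, ln_pow, l16, l9, l4 in Hln by lra.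
    set (l2 := ln 2) in *. set (l3 := ln 3) in *. set (lF := ln (INR (Factorial.fact p))) in *.
    set (lL := ln lam) in *. set (lB := ln B2) in *. set (q := INR p) in *.
    assert (Hq : 0 < q) by lra.
    match goal with |- ?A <= ?B => assert (E : B - A = (q * (2 * l3 - 4 * l2) + 2 * l2 + lF) / q) end.
    { field. lra. }
    assert (Hnum : 0 <= q * (2 * l3 - 4 * l2) + 2 * l2 + lF) by lra.
    assert (0 <= (q * (2 * l3 - 4 * l2) + 2 * l2 + lF) / q) by (apply Rdiv_le_0_compat; lra).
    lra.
Qed.

Lemma sqrt_le_sq x y : 0 <= x -> sqrt x <= y -> x <= y ^ 2.
Proof.
  intros Hx H. rewrite <- (pow2_sqrt x) by auto.
  apply pow_incr. split; auto. apply sqrt_pos.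
Qed.

Lemma Rpower_sq x e : Rpower x e ^ 2 = Rpower x (2 * e).
Proof. unfold Rpower. simpl. rewrite Rmult_1_r, <- exp_plus. f_equal. ring. Qed.

Theorem proposition4p7 (lam : R) (p : nat) (f F : R -> R -> C)
  (beta_p beta_p1 : R) :
  0 < lam ->
  (1 <= p)%nat ->
  Ck_R2_C (S p) F ->
  (forall x1 x2, in_rect 0 (1 / (2 * sqrt lam)) (- (1 / (4 * sqrt lam)))
                   (1 / (4 * sqrt lam)) x1 x2 -> F x1 x2 = f x1 x2) ->
  (forall x2, - (1 / (4 * sqrt lam)) <= x2 <= 1 / (4 * sqrt lam) ->
     f 0 x2 = 0%C) ->
  0 < beta_p -> 0 < beta_p1 ->
  L2_rect 0 (1 / (2 * sqrt lam)) (- (1 / (4 * sqrt lam))) (1 / (4 * sqrt lam))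
    (dx1_n (S p) F) <= beta_p1 * Rpower lam (1 + INR p / 2) ->
  L2_rect 0 (1 / (2 * sqrt lam)) (- (1 / (4 * sqrt lam))) (1 / (4 * sqrt lam))
    (dx1_n p F) <= beta_p * Rpower lam (1 / 2 + INR p / 2) ->
  forall xi1 xi2 phi : R,
    L2sq_rect 0 (1 / (2 * sqrt lam)) (- (1 / (4 * sqrt lam))) (1 / (4 * sqrt lam))
      (fun x1 x2 => Cminus (f x1 x2) (expi (xi1 * x1 + xi2 * x2 + phi)))
    >= 1 / 36 *
       Rmin (Rpower 4 (- INR p - 5 / 2) * / lam)
            (Rpower 4 (- (INR p / 2) - 3 / 2) * Rpower 6 (1 / (2 * INR p))
             * Rpower (beta_p1 ^ 2 + beta_p ^ 2) (- (1 / (2 * INR p)))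
             * Rpower lam (-1 - 1 / INR p)).
Proof.
  intros Hlam Hp HCk HFf Hf0 Hbp Hbp1 HI1 HI0 xi1 xi2 phi.
  destruct p as [|N]; [lia|].
  assert (Hs : 0 < sqrt lam) by (apply sqrt_lt_R0; auto).
  assert (E4 : 1 / (4 * sqrt lam) = 1 / (2 * sqrt lam) / 2) by (field; lra).
  rewrite E4 in *.
  set (L := 1 / (2 * sqrt lam)) in *.
  assert (HL : 0 < L) by (unfold L; apply Rdiv_lt_0_compat; lra).
  assert (Hsl : sqrt lam ^ 2 = lam) by (apply pow2_sqrt; lra).
  assert (HL2 : L ^ 2 * lam = 1 / 4).
  { unfold L. rewrite <- Hsl at 2. field. lra. }
  destruct HCk as [HCr HCi].
  set (gr := fun x1 x2 => Re (F x1 x2)) in *.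
  set (gi := fun x1 x2 => Im (F x1 x2)) in *.
  set (cs := fun x1 x2 => cos (xi1 * x1 + xi2 * x2 + phi)).
  set (sn := fun x1 x2 => sin (xi1 * x1 + xi2 * x2 + phi)).
  set (c0 := - (L / 2)) in *. set (c1 := L / 2) in *.
  assert (EqD : L2sq_rect 0 L c0 c1 (fun x1 x2 => Cminus (f x1 x2) (expi (xi1 * x1 + xi2 * x2 + phi))) =
     RInt (fun x1 => RInt (fun x2 => (gr x1 x2 - cs x1 x2) ^ 2 + (gi x1 x2 - sn x1 x2) ^ 2) c0 c1) 0 L).
  { unfold L2sq_rect. apply (RInt_ext (V := R_CompleteNormedModule)). intros x1 Hx1.
    rewrite Rmin_left, Rmax_right in Hx1 by lra.
    apply (RInt_ext (V := R_CompleteNormedModule)). intros x2 Hx2.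
    rewrite Rmin_left, Rmax_right in Hx2 by (unfold c0, c1; lra).
    rewrite <- HFf by (unfold in_rect; unfold c0, c1 in *; split; lra).
    unfold Cmod, Cminus, Cplus, Copp, expi, gr, gi, cs, sn, Re, Im. simpl fst; simpl snd.
    rewrite pow2_sqrt. match goal with |- ?A = ?B => change (@eq R A B) end. ring.
    assert (A1 := pow2_ge_0 (fst (F x1 x2) + - cos (xi1 * x1 + xi2 * x2 + phi))).
    assert (A2 := pow2_ge_0 (snd (F x1 x2) + - sin (xi1 * x1 + xi2 * x2 + phi))). lra. }
  assert (EqI : forall k, L2sq_rect 0 L c0 c1 (dx1_n k F) =
     RInt (fun x1 => RInt (fun x2 => Derive_n (fun t => gr t x2) k x1 ^ 2 +
                                    Derive_n (fun t => gi t x2) k x1 ^ 2) c0 c1) 0 L).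
  { intros k. unfold L2sq_rect. apply RInt_ext_R. intros x1. apply RInt_ext_R. intros x2.
    unfold Cmod, dx1_n. simpl fst; simpl snd. rewrite pow2_sqrt; auto.
    assert (A1 := pow2_ge_0 (Derive_n (fun t => Re (F t x2)) k x1)).
    assert (A2 := pow2_ge_0 (Derive_n (fun t => Im (F t x2)) k x1)). lra. }
  assert (HdR := Ck_exdn (S (S N)) gr HCr).
  assert (HdI := Ck_exdn (S (S N)) gi HCi).
  assert (HcR := Ck_JC (S (S N)) gr HCr).
  assert (HcI := Ck_JC (S (S N)) gi HCi).
  assert (H0R : forall x2, c0 <= x2 <= c1 -> gr 0 x2 = 0).
  { intros x2 Hx2. unfold gr. rewrite HFf by (unfold in_rect; split; lra). rewrite Hf0 by auto. reflexivity. }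
  assert (H0I : forall x2, c0 <= x2 <= c1 -> gi 0 x2 = 0).
  { intros x2 Hx2. unfold gi. rewrite HFf by (unfold in_rect; split; lra). rewrite Hf0 by auto. reflexivity. }
  assert (Jlin : JC (fun x1 x2 => xi1 * x1 + xi2 * x2 + phi)).
  { apply JC_plus; [apply JC_plus|apply JC_const]; apply JC_mult; try apply JC_const; [apply JC_x|apply JC_y]. }
  assert (Jcs : JC cs) by (apply JC_cos; auto).
  assert (Jsn : JC sn) by (apply JC_sin; auto).
  assert (Hcs1 : forall x y, cs x y ^ 2 + sn x y ^ 2 = 1).
  { intros x y. unfold cs, sn. rewrite <- (sin2_cos2 (xi1 * x + xi2 * y + phi)). unfold Rsqr. ring. }
  set (Ip := RInt (fun x1 => RInt (fun x2 => Derive_n (fun t => gr t x2) (S N) x1 ^ 2 +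
                                    Derive_n (fun t => gi t x2) (S N) x1 ^ 2) c0 c1) 0 L).
  set (Ip1 := RInt (fun x1 => RInt (fun x2 => Derive_n (fun t => gr t x2) (S (S N)) x1 ^ 2 +
                                    Derive_n (fun t => gi t x2) (S (S N)) x1 ^ 2) c0 c1) 0 L).
  assert (Jint : forall k, (k <= S (S N))%nat -> JC (fun x1 x2 => Derive_n (fun t => gr t x2) k x1 ^ 2 +
                                    Derive_n (fun t => gi t x2) k x1 ^ 2)).
  { intros k Hk. apply JC_plus; apply JC_sq; auto. }
  assert (Inn : forall k, (k <= S (S N))%nat -> 0 <= RInt (fun x1 => RInt (fun x2 => Derive_n (fun t => gr t x2) k x1 ^ 2 +
                                    Derive_n (fun t => gi t x2) k x1 ^ 2) c0 c1) 0 L).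
  { intros k Hk. apply RInt_nonneg_c; try lra. apply CR_par1; auto.
    intros x _. apply RInt_nonneg_c. unfold c0, c1; lra.
    exact (JC_slice2 _ (Jint k Hk) x).
    intros y _. assert (A1 := pow2_ge_0 (Derive_n (fun t => gr t y) k x)).
    assert (A2 := pow2_ge_0 (Derive_n (fun t => gi t y) k x)). lra. }
  assert (HIp0 : 0 <= Ip) by (apply Inn; lia).
  assert (HIp10 : 0 <= Ip1) by (apply Inn; lia).
  assert (HIp : Ip <= beta_p ^ 2 * lam ^ S (S N)).
  { unfold L2_rect in HI0. rewrite EqI in HI0. fold Ip in HI0.
    apply sqrt_le_sq in HI0; auto. rewrite Rpow_mult_distr, Rpower_sq in HI0.
    replace (2 * (1 / 2 + INR (S N) / 2)) with (INR (S (S N))) in HI0 by (rewrite !S_INR; field).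
    rewrite Rpower_pow in HI0 by auto. exact HI0. }
  assert (HIp1 : Ip1 <= beta_p1 ^ 2 * lam ^ S (S (S N))).
  { unfold L2_rect in HI1. rewrite EqI in HI1. fold Ip1 in HI1.
    apply sqrt_le_sq in HI1; auto. rewrite Rpow_mult_distr, Rpower_sq in HI1.
    replace (2 * (1 + INR (S N) / 2)) with (INR (S (S (S N)))) in HI1 by (rewrite !S_INR; field).
    rewrite Rpower_pow in HI1 by auto. exact HI1. }
  set (B2 := beta_p1 ^ 2 + beta_p ^ 2).
  assert (HB2 : 0 < B2) by (unfold B2; assert (0 < beta_p1 ^ 2) by (apply pow_lt; lra);
                             assert (0 < beta_p ^ 2) by (apply pow_lt; lra); lra).
  assert (HF : 0 < INR (Factorial.fact (S N))) by (apply lt_0_INR, Factorial.lt_O_fact).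
  set (X := 96 * INR (Factorial.fact (S N)) ^ 2 / (lam ^ S (S (S N)) * B2)).
  assert (HX : 0 < X).
  { unfold X. apply Rdiv_lt_0_compat. apply Rmult_lt_0_compat; [lra|apply pow_lt; auto].
    apply Rmult_lt_0_compat; auto. apply pow_lt; auto. }
  set (rho := Rpower X (1 / (2 * INR (S N)))).
  assert (Hrho : 0 < rho) by (unfold rho, Rpower; apply exp_pos).
  set (r := Rmin L rho).
  assert (Hr : 0 < r) by (unfold r; apply Rmin_glb_lt; auto).
  assert (HrL : r <= L) by (unfold r; apply Rmin_l).
  assert (Hrho2 : rho ^ (2 * S N) = X).
  { unfold rho. rewrite <- Rpower_pow by (unfold Rpower; apply exp_pos).
    rewrite Rpower_mult. rewrite mult_INR.
    replace (1 / (2 * INR (S N)) * (INR 2 * INR (S N))) with 1.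
    - apply Rpower_1; auto.
    - simpl INR at 2. field. apply not_0_INR. lia. }
  assert (Hr2p : r ^ (2 * S N) <= X).
  { rewrite <- Hrho2. apply pow_incr. split; [lra|]. unfold r; apply Rmin_r. }
  assert (HY : 2 / L * Ip + 2 * L * Ip1 <= 2 / L * lam ^ S (S N) * B2).
  { assert (E : 2 * L * (beta_p1 ^ 2 * lam ^ S (S (S N))) =
                2 / L * lam ^ S (S N) * (beta_p1 ^ 2 * (L ^ 2 * lam))).
    { simpl pow. field. lra. }
    rewrite HL2 in E.
    assert (2 / L * Ip <= 2 / L * (beta_p ^ 2 * lam ^ S (S N))).
    { apply Rmult_le_compat_l; auto. apply Rdiv_le_0_compat; lra. }
    assert (2 * L * Ip1 <= 2 * L * (beta_p1 ^ 2 * lam ^ S (S (S N)))).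
    { apply Rmult_le_compat_l; auto. lra. }
    assert (Hl2 : 0 < 2 / L * lam ^ S (S N)) by (apply Rmult_lt_0_compat; [apply Rdiv_lt_0_compat; lra|apply pow_lt; auto]).
    assert (0 <= beta_p1 ^ 2) by apply pow2_ge_0.
    unfold B2. nra. }
  assert (HXc : r ^ (2 * S N) * (2 / L * Ip + 2 * L * Ip1) <= 768 * L * INR (Factorial.fact (S N)) ^ 2).
  { apply Rle_trans with (X * (2 / L * lam ^ S (S N) * B2)).
    - apply Rmult_le_compat; auto. apply pow_le; lra.
      assert (0 <= 2 / L * Ip) by (apply Rmult_le_pos; auto; apply Rdiv_le_0_compat; lra).
      assert (0 <= 2 * L * Ip1) by (apply Rmult_le_pos; auto; lra). lra.
    - right. unfold X. assert (Hlam4 : lam = / (4 * L ^ 2)) by (field_simplify_eq; lra).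
      assert (HG : 0 < lam ^ S (S N)) by (apply pow_lt; auto).
      change (lam ^ S (S (S N))) with (lam * lam ^ S (S N)).
      set (G := lam ^ S (S N)) in *.
      rewrite Hlam4. field. repeat split; lra. }
  assert (Dbound := core2D gr gi cs sn N L r HdR HdI HcR HcI H0R H0I Jcs Jsn Hcs1 Hr HrL HXc).
  fold c0 c1 in Dbound.
  rewrite EqD. apply Rle_ge.
  eapply Rle_trans; [|exact Dbound].
  destruct (Rle_dec L rho) as [Hle|Hgt].
  - replace r with L by (unfold r; rewrite Rmin_left; auto).
    apply Rle_trans with (1 / 36 * (Rpower 4 (- INR (S N) - 5 / 2) * / lam)).
    + apply Rmult_le_compat_l; [lra|apply Rmin_l].
    + apply (finalA lam (S N)); auto.
  - replace r with rho by (unfold r; rewrite Rmin_right; auto; lra).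
    apply Rle_trans with (1 / 36 * (Rpower 4 (- (INR (S N) / 2) - 3 / 2) * Rpower 6 (1 / (2 * INR (S N))) *
            Rpower B2 (- (1 / (2 * INR (S N)))) * Rpower lam (-1 - 1 / INR (S N)))).
    + apply Rmult_le_compat_l; [lra|apply Rmin_r].
    + apply (finalB lam B2 (S N)); auto.
Qed.
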